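(* Fix $a\in(0,\tfrac12)$ and $E\in[0,1]$. Suppose there exist $\lambda_1<\lambda_2<0$ such that the $\Theta$-flow described in the context has corridors $\mathcal K_1(E,\lambda_1)$ and $\mathcal K_1(E,\lambda_2)$ with $w(\mathcal K_1(E,\lambda_2))=0$ and $w(\mathcal K_1(E,\lambda_1))\ge1$. Then there is $\lambda\in(\lambda_1,\lambda_2)$ such that the $\Theta$-flow with parameters $(E,\lambda)$ has a saddles connector going from $(0,0)$ to $(\pi,-\pi)$.
   Context: For $a\in(0,\tfrac12)$, $E\in[0,1]$, $\lambda\in\mathbb R$, the $\Theta$-flow is the system on the strip $[0,\pi]\times\mathbb R$ (with $\Theta$ understood mod $2\pi$ on the cylinder) $$\dot\theta=\sin\theta,\qquad \dot\Theta=-2a\sin\theta\cos\theta\cos\Theta+2aE\sin^2\theta\sin\Theta-\sin\Theta+2\lambda\sin\theta.$$ Its equilibria are $(0,0)$, $(0,\pi)$ (left) and $(\pi,-\pi)$, $(\pi,0)$ (right), mod $2\pi$ in $\Theta$. Let $\widetilde{\mathcal W}^-$ be the unique orbit in $(0,\pi)\times\mathbb R$ with $\alpha$-limit $(0,0)$ and $\widetilde{\mathcal W}^+$ the unique orbit with $\omega$-limit $(\pi,-\pi)$. A saddles connector from $(0,0)$ to $(\pi,-\pi)$ is an orbit with $\alpha$-limit $(0,0)$ and $\omega$-limit $(\pi,-\pi)$. The flow has a corridor $\mathcal K_1(E,\lambda)$ of winding number $k\in\mathbb Z$ if $\widetilde{\mathcal W}^-\neq\widetilde{\mathcal W}^+$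 and the $\omega$-limit of $\widetilde{\mathcal W}^-$ is $(\pi,-2\pi k)$. *)

(* Defs.v *)
From Stdlib Require Import Reals.
From Coquelicot Require Import Coquelicot.
Open Scope R_scope.

(* Right-hand side of the Theta-equation of the Theta-flow, in the lifted
   coordinates (theta, Theta) in [0,pi] x R (Theta NOT reduced mod 2pi). *)
Definition Theta_rhs (a E lam th Th : R) : R :=
  - 2 * a * sin th * cos th * cos Th + 2 * a * E * (sin th)^2 * sin Th
  - sin Th + 2 * lam * sin th.

(* A (global, time-parametrized) trajectory of the Theta-flow.  The vector
   field is smooth and bounded, so every maximal solution is defined on R;
   an orbit is the image of such a solution. *)
Definition is_traj (a E lam : R) (th Th : R -> R) : Prop :=
  forall t, is_derive th t (sin (th t)) /\
            is_derive Th t (Theta_rhs a E lam (th t) (Th t)).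

Definition in_open_strip (th : R -> R) : Prop :=
  forall t, 0 < th t < PI.

Definition alpha_lim (th Th : R -> R) (p1 p2 : R) : Prop :=
  is_lim th m_infty p1 /\ is_lim Th m_infty p2.
Definition omega_lim (th Th : R -> R) (p1 p2 : R) : Prop :=
  is_lim th p_infty p1 /\ is_lim Th p_infty p2.

Definition is_Wminus (a E lam : R) (th Th : R -> R) : Prop :=
  is_traj a E lam th Th /\ in_open_strip th /\ alpha_lim th Th 0 0.
Definition is_Wplus (a E lam : R) (th Th : R -> R) : Prop :=
  is_traj a E lam th Th /\ in_open_strip th /\ omega_lim th Th PI (- PI).

Definition orbit (th Th : R -> R) : R * R -> Prop :=
  fun p => exists t, p = (th t, Th t).

(* The flow with parameters (E,lam) has a corridor K_1(E,lam) of winding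
   number k: W~^- exists, W~^- <> W~^+, and the omega-limit of W~^- is
   (pi, -2 pi k).  (W~^- is stated to be unique in the paper; we require the
   omega-limit property for every trajectory with alpha-limit (0,0).) *)
Definition corridor_K1 (a E lam : R) (k : Z) : Prop :=
  (exists th Th, is_Wminus a E lam th Th) /\
  (forall th Th th' Th', is_Wminus a E lam th Th -> is_Wplus a E lam th' Th' ->
       orbit th Th <> orbit th' Th') /\
  (forall th Th, is_Wminus a E lam th Th ->
       omega_lim th Th PI (- 2 * PI * IZR k)).

Definition saddles_connector (a E lam : R) : Prop :=
  exists th Th, is_traj a E lam th Th /\
    alpha_lim th Th 0 0 /\ omega_lim th Th PI (- PI).

(* Main.v *)
Require Import Defs.
From Stdlib Require Import Reals Lra Lia Psatz Factorial.
From Coquelicot Require Import Coquelicot.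
Open Scope R_scope.

Lemma cont_eps (g : R -> R) (x : R) :
  continuous g x <-> (forall eps, 0 < eps -> exists del, 0 < del /\
     forall y, Rabs (y - x) < del -> Rabs (g y - g x) < eps).
Proof.
  change (continuous g x) with (filterlim g (locally x) (locally (g x))).
  rewrite <- continuity_pt_filterlim.
  unfold continuity_pt, continue_in, limit1_in, limit_in, D_x, no_cond; simpl.
  unfold R_dist. split.
  - intros H eps Heps. destruct (H eps Heps) as [d [Hd H2]].
    exists d; split; auto. intros y Hy.
    destruct (Req_dec y x) as [->|Hne].
    + rewrite Rminus_eq_0, Rabs_R0; lra.
    + apply H2; split; auto.
  - intros H eps Heps. destruct (H eps Heps) as [d [Hd H2]].
    exists d; split; auto. intros y [_ Hy]. apply H2; auto.
Qed.

Lemma mono_deriv_closed (h dh : R -> R) (a b : R) : a <= b ->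
  (forall x, a <= x <= b -> is_derive h x (dh x)) ->
  (forall x, a < x < b -> dh x <= 0) -> h b <= h a.
Proof.
  intros Hab Hd Hn.
  destruct (Req_dec a b) as [->|Hne]; [lra|].
  destruct (MVT_cor2 h dh a b) as [c [Hc1 Hc2]]; [lra| |].
  - intros c Hc. apply is_derive_Reals. auto.
  - assert (dh c * (b - a) <= 0).
    { apply Rmult_le_0_r; [apply Hn; lra|lra]. }
    lra.
Qed.

Lemma mono_deriv (h dh : R -> R) (a b : R) : a <= b ->
  (forall x, a < x <= b -> is_derive h x (dh x)) ->
  continuous h a ->
  (forall x, a < x < b -> dh x <= 0) -> h b <= h a.
Proof.
  intros Hab Hd Hc Hn.
  destruct (Req_dec a b) as [->|Hne]; [lra|].
  apply Rnot_lt_le; intro Hlt.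
  apply cont_eps with (eps := h b - h a) in Hc as [d [Hd0 Hc]]; [|lra].
  set (a' := Rmin (a + d/2) ((a+b)/2)).
  assert (Ha' : a < a' < b).
  { unfold a'; split; [apply Rmin_glb_lt; lra|].
    eapply Rle_lt_trans; [apply Rmin_r|lra]. }
  assert (h b <= h a').
  { apply mono_deriv_closed with dh; try lra.
    - intros x Hx; apply Hd; lra.
    - intros x Hx; apply Hn; lra. }
  assert (Rabs (h a' - h a) < h b - h a).
  { apply Hc. rewrite Rabs_right by lra. unfold a'.
    eapply Rle_lt_trans; [apply Rplus_le_compat_r, Rmin_l|lra]. }
  apply Rabs_def2 in H0. lra.
Qed.

Lemma RInt_deriv (g : R -> R) (a x : R) :
  (forall y, continuous g y) -> is_derive (fun t => RInt g a t) x (g x).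
Proof.
  intros Hg. apply is_derive_RInt with (a := a).
  - exists (mkposreal 1 Rlt_0_1). intros y _. apply RInt_correct.
    apply ex_RInt_continuous. intros; auto.
  - auto.
Qed.

Lemma RInt_cont (g : R -> R) (a x : R) :
  (forall y, continuous g y) -> continuous (fun t => RInt g a t) x.
Proof.
  intros Hg. apply (ex_derive_continuous (K:=R_AbsRing) (V:=R_NormedModule)). eexists. apply RInt_deriv; auto.
Qed.

Lemma exRInt (g : R -> R) a b : (forall y, continuous g y) -> ex_RInt g a b.
Proof. intros; apply (ex_RInt_continuous (V:=R_CompleteNormedModule)); auto. Qed.

Lemma Rmax_cont (c x : R) : continuous (fun t => Rmax c t) x.
Proof.
  apply cont_eps. intros eps Heps. exists eps; split; auto.
  intros y Hy. unfold Rmax. destruct (Rle_dec c y), (Rle_dec c x);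
  rewrite ?Rminus_eq_0, ?Rabs_R0; try lra; apply Rabs_lt_between in Hy;
  apply Rabs_lt_between; lra.
Qed.

Lemma cont_comp_Rmax (g : R -> R) c x :
  (forall y, continuous g y) -> continuous (fun t => g (Rmax c t)) x.
Proof.
  intros Hg. apply (continuous_comp (fun t => Rmax c t) g). apply Rmax_cont. apply Hg.
Qed.

Lemma abs_RInt_diff (g h : R -> R) a b eps : a <= b ->
  (forall y, continuous g y) -> (forall y, continuous h y) ->
  (forall s, a <= s <= b -> Rabs (g s - h s) <= eps) ->
  Rabs (RInt g a b - RInt h a b) <= (b - a) * eps.
Proof.
  intros Hab Hg Hh Hb.
  assert (E : RInt g a b - RInt h a b = RInt (fun s => g s - h s) a b).
  { symmetry. apply (RInt_minus g h); apply exRInt; auto. }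
  rewrite E. apply abs_RInt_le_const; auto.
  apply exRInt. intros y. apply (continuous_minus g h); auto.
Qed.

Fixpoint pic (f : R -> R -> R) (t0 y0 : R) (n : nat) (t : R) : R :=
  match n with
  | O => y0
  | S k => y0 + RInt (fun s => f s (pic f t0 y0 k s)) t0 (Rmax t0 t)
  end.

Lemma add_sub_cancel (y a : R) : y + a - y = a.
Proof. ring. Qed.
Lemma add_sub_cancel2 (y a b : R) : y + a - (y + b) = a - b.
Proof. ring. Qed.

Section Picard.
Variable f : R -> R -> R.
Variables L M : R.
Hypothesis HL : 0 < L.
Hypothesis Hlip : forall t y z, Rabs (f t y - f t z) <= L * Rabs (y - z).
Hypothesis Hbnd : forall t y, Rabs (f t y) <= M.
Hypothesis Hct : forall y t, continuous (fun s => f s y) t.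

Lemma fcomp_cont (u : R -> R) : (forall x, continuous u x) ->
  forall x, continuous (fun s => f s (u s)) x.
Proof.
  intros Hu x. apply cont_eps. intros eps Heps.
  destruct (proj1 (cont_eps _ _) (Hct (u x) x) (eps/2)) as [d1 [Hd1 H1]]; [lra|].
  destruct (proj1 (cont_eps _ _) (Hu x) (eps/(2*L))) as [d2 [Hd2 H2]].
  { apply Rdiv_lt_0_compat; lra. }
  exists (Rmin d1 d2); split; [apply Rmin_glb_lt; auto|].
  intros y Hy.
  assert (A1 : Rabs (f y (u x) - f x (u x)) < eps/2).
  { apply H1. eapply Rlt_le_trans; [apply Hy|apply Rmin_l]. }
  assert (A2 : Rabs (u y - u x) < eps/(2*L)).
  { apply H2. eapply Rlt_le_trans; [apply Hy|apply Rmin_r]. }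
  assert (A3 : Rabs (f y (u y) - f y (u x)) <= L * (eps/(2*L))).
  { eapply Rle_trans; [apply Hlip|]. apply Rmult_le_compat_l; lra. }
  replace (L * (eps / (2*L))) with (eps/2) in A3 by (field; lra).
  replace (f y (u y) - f x (u x)) with ((f y (u y) - f y (u x)) + (f y (u x) - f x (u x))) by ring.
  eapply Rle_lt_trans; [apply Rabs_triang|]. lra.
Qed.

Variables t0 y0 : R.
Notation P := (pic f t0 y0).

Lemma pic_cont n : forall x, continuous (P n) x.
Proof.
  induction n; intros x; simpl.
  - apply continuous_const.
  - apply (continuous_plus (fun _ => y0)). apply continuous_const.
    apply (continuous_comp (fun t => Rmax t0 t) (fun t => RInt (fun s => f s (P n s)) t0 t)).
    apply Rmax_cont. apply RInt_cont. apply fcomp_cont; auto.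
Qed.

Lemma pic_left n t : t <= t0 -> P n t = y0.
Proof.
  intros H; destruct n; simpl; auto.
  rewrite Rmax_left by lra. rewrite RInt_point. unfold zero; simpl; ring.
Qed.

Lemma pic_S n t : t0 <= t -> P (S n) t = y0 + RInt (fun s => f s (P n s)) t0 t.
Proof. intros H; simpl; rewrite Rmax_right by lra; auto. Qed.

Lemma M_nonneg : 0 <= M.
Proof. eapply Rle_trans; [apply Rabs_pos|apply (Hbnd 0 0)]. Qed.

Definition qb (n : nat) (s : R) := M / L * (L * (s - t0)) ^ (S n) / INR (fact (S n)).

Lemma qb_deriv n s : is_derive (qb (S n)) s (L * qb n s).
Proof.
  unfold qb.
  assert (H : is_derive (fun s => (L * (s - t0)) ^ (S (S n))) s
               (INR (S (S n)) * L * (L * (s - t0)) ^ (S n))).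
  { apply (is_derive_pow (fun s => L * (s - t0))).
    auto_derive; auto; ring. }
  apply is_derive_scal with (k := M / L) in H.
  apply is_derive_scal with (k := / INR (fact (S (S n)))) in H.
  replace (L * (M / L * (L * (s - t0)) ^ S n / INR (fact (S n))))
    with (/ INR (fact (S (S n))) * (M / L * (INR (S (S n)) * L * (L * (s - t0)) ^ S n))).
  - eapply is_derive_ext; [|apply H]. intros t. cbv beta. unfold Rdiv at 2. apply Rmult_comm.
  - rewrite (fact_simpl (S n)), mult_INR. field.
    repeat split; first [apply INR_fact_neq_0 | lra | (apply not_0_INR; lia)].
Qed.

Lemma qb_cont n x : continuous (fun s => L * qb n s) x.
Proof.
  apply (ex_derive_continuous (K:=R_AbsRing) (V:=R_NormedModule)).
  unfold qb. auto_derive. auto.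
Qed.

Lemma qb_t0 n : qb n t0 = 0.
Proof. unfold qb. rewrite Rminus_eq_0, Rmult_0_r, pow_i by lia. unfold Rdiv; ring. Qed.

Lemma pic_diff n t : t0 <= t -> Rabs (P (S n) t - P n t) <= qb n t.
Proof.
  revert t; induction n; intros t Ht.
  - rewrite pic_S by auto. simpl pic at 2.
    rewrite add_sub_cancel.
    eapply Rle_trans. apply abs_RInt_le_const; [lra | apply exRInt; intros; apply Hct | intros s Hs; apply Hbnd].
    unfold qb. simpl. right. field. lra.
  - rewrite !pic_S by auto.
    rewrite add_sub_cancel2.
    assert (Hc1 := fcomp_cont _ (pic_cont (S n))).
    assert (Hc0 := fcomp_cont _ (pic_cont n)).
    assert (E : RInt (fun s : R => f s (P (S n) s)) t0 t - RInt (fun s : R => f s (P n s)) t0 t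
             = RInt (fun s => f s (P (S n) s) - f s (P n s)) t0 t).
    { symmetry. apply (RInt_minus (V:=R_CompleteNormedModule)); apply exRInt; auto. }
    rewrite E; clear E.
    eapply Rle_trans. apply abs_RInt_le; auto.
    apply exRInt; intros y; apply (continuous_minus (fun s => f s (P (S n) s))); auto.
    eapply Rle_trans. apply RInt_le with (g := fun s => L * qb n s); auto.
    + apply exRInt. intros y. apply continuous_comp; [|apply continuous_Rabs].
      apply (continuous_minus (fun s => f s (P (S n) s))); auto.
    + apply exRInt. apply qb_cont.
    + intros s Hs. eapply Rle_trans; [apply Hlip|]. apply Rmult_le_compat_l; [lra|].
      apply IHn; lra.
    + right. apply is_RInt_unique.
      assert (H := is_RInt_derive (V:=R_CompleteNormedModule) (qb (S n)) (fun s => L * qb n s) t0 t).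
      rewrite qb_t0 in H. replace (qb (S n) t) with (minus (qb (S n) t) 0).
      apply H. intros; apply qb_deriv. intros; apply qb_cont.
      unfold minus, plus, opp; simpl; ring.
Qed.

End Picard.

Definition ucauchy (u : nat -> R -> R) := forall A eps, 0 < eps -> exists N,
  forall n m, (N <= n)%nat -> (N <= m)%nat -> forall t, Rabs t <= A ->
  Rabs (u n t - u m t) <= eps.

Definition lim_fun (u : nat -> R -> R) (t : R) : R := real (Lim_seq (fun n => u n t)).

Section Lim.
Variable u : nat -> R -> R.
Hypothesis Hu : ucauchy u.

Lemma ucauchy_lim t : is_lim_seq (fun n => u n t) (Finite (lim_fun u t)).
Proof.
  assert (Hc : Cauchy_crit (fun n => u n t)).
  { intros eps Heps. destruct (Hu (Rabs t) (eps/2)) as [N HN]; [lra|].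
    exists N. intros n m Hn Hm. unfold R_dist.
    eapply Rle_lt_trans; [apply HN; auto; lra|lra]. }
  destruct (Stdlib.Reals.Rcomplete.R_complete _ Hc) as [l Hl].
  unfold lim_fun. rewrite (is_lim_seq_unique _ l); simpl; apply is_lim_seq_Reals; auto.
Qed.

Lemma ucauchy_unif A eps : 0 < eps -> exists N, forall n, (N <= n)%nat ->
  forall t, Rabs t <= A -> Rabs (u n t - lim_fun u t) <= eps.
Proof.
  intros Heps. destruct (Hu A eps Heps) as [N HN]. exists N.
  intros n Hn t Ht. apply Rnot_lt_le; intro Hlt.
  assert (Hl := proj1 (is_lim_seq_Reals _ (lim_fun u t)) (ucauchy_lim t)).
  destruct (Hl (Rabs (u n t - lim_fun u t) - eps)) as [m0 Hm0]; [lra|].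
  specialize (Hm0 (max N m0) ltac:(lia)). unfold R_dist in Hm0.
  specialize (HN n (max N m0) Hn ltac:(lia) t Ht).
  assert (Rabs (u n t - lim_fun u t) <= Rabs (u n t - u (max N m0) t) + Rabs (u (max N m0) t - lim_fun u t)).
  { replace (u n t - lim_fun u t) with ((u n t - u (max N m0) t) + (u (max N m0) t - lim_fun u t)) by ring.
    apply Rabs_triang. }
  lra.
Qed.

Lemma ucauchy_cont : (forall n x, continuous (u n) x) -> forall x, continuous (lim_fun u) x.
Proof.
  intros Hc x. apply cont_eps. intros eps Heps.
  destruct (ucauchy_unif (Rabs x + 1) (eps/3)) as [N HN]; [lra|].
  destruct (proj1 (cont_eps _ _) (Hc N x) (eps/3)) as [d [Hd Hd2]]; [lra|].
  exists (Rmin d 1); split; [apply Rmin_glb_lt; lra|].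
  intros y Hy.
  assert (Hy1 : Rabs (y - x) < d) by (eapply Rlt_le_trans; [apply Hy|apply Rmin_l]).
  assert (Hy2 : Rabs (y - x) < 1) by (eapply Rlt_le_trans; [apply Hy|apply Rmin_r]).
  assert (Ay : Rabs y <= Rabs x + 1).
  { replace y with ((y - x) + x) by ring. eapply Rle_trans; [apply Rabs_triang|lra]. }
  assert (H1 := HN N (Nat.le_refl _) y Ay).
  assert (H2 := HN N (Nat.le_refl _) x ltac:(lra)).
  assert (H3 := Hd2 y Hy1).
  replace (lim_fun u y - lim_fun u x) with
    (-(u N y - lim_fun u y) + (u N y - u N x) + (u N x - lim_fun u x)) by ring.
  eapply Rle_lt_trans; [apply Rabs_triang|].
  eapply Rle_lt_trans; [apply Rplus_le_compat_r, Rabs_triang|].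
  rewrite Rabs_Ropp. lra.
Qed.

End Lim.

Lemma zero_of_small (x C : R) : 0 <= C -> (forall eps, 0 < eps -> Rabs x <= C * eps) -> x = 0.
Proof.
  intros HC H. destruct (Req_dec x 0) as [|Hne]; auto. exfalso.
  assert (Hx : 0 < Rabs x) by (apply Rabs_pos_lt; auto).
  specialize (H (Rabs x / (2 * (C + 1)))).
  assert (0 < Rabs x / (2 * (C + 1))) by (apply Rdiv_lt_0_compat; lra).
  specialize (H H0).
  assert (C * (Rabs x / (2 * (C + 1))) < Rabs x).
  { apply Rmult_lt_reg_r with (2 * (C + 1)); [lra|].
    replace (C * (Rabs x / (2 * (C + 1))) * (2 * (C + 1))) with (C * Rabs x) by (field; lra).
    nra. }
  lra.
Qed.

Lemma exp_sum_cauchy (X : R) :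
  Cauchy_crit (fun n => sum_f_R0 (fun i => / INR (fact i) * X ^ i) n).
Proof.
  apply CV_Cauchy. exists (exp X). unfold exp.
  destruct (exist_exp X) as [l Hl]. simpl. exact Hl.
Qed.

Section Sol.
Variable f : R -> R -> R.
Variables L M : R.
Hypothesis HL : 0 < L.
Hypothesis Hlip : forall t y z, Rabs (f t y - f t z) <= L * Rabs (y - z).
Hypothesis Hbnd : forall t y, Rabs (f t y) <= M.
Hypothesis Hct : forall y t, continuous (fun s => f s y) t.

Lemma inteq_limit (u v : nat -> R -> R) (U : R -> R) (a : R) (N0 : nat) :
  (forall x, continuous U x) ->
  (forall A eps, 0 < eps -> exists N, forall n, (N <= n)%nat -> forall t, Rabs t <= A -> Rabs (u n t - U t) <= eps) ->
  (forall A eps, 0 < eps -> exists N, forall n, (N <= n)%nat -> forall t, Rabs t <= A -> Rabs (v n t - U t) <= eps) ->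
  (forall n x, continuous (v n) x) ->
  (forall n, (N0 <= n)%nat -> forall s, a <= s -> u n s = u n a + RInt (fun r => f r (v n r)) a s) ->
  forall s, a <= s -> U s = U a + RInt (fun r => f r (U r)) a s.
Proof.
  intros HU Hu Hv Hvc Heq s Has.
  assert (Hz : U s - U a - RInt (fun r => f r (U r)) a s = 0).
  2:{ lra. }
  apply zero_of_small with (C := 2 + (s - a) * L); [nra|].
  intros eps Heps.
  destruct (Hu (Rabs a + Rabs s) eps Heps) as [N1 H1].
  destruct (Hv (Rabs a + Rabs s) eps Heps) as [N2 H2].
  set (n := max N0 (max N1 N2)).
  assert (E := Heq n ltac:(unfold n; lia) s Has).
  assert (B1 := H1 n ltac:(unfold n; lia) s ltac:(pose proof (Rabs_pos a); lra)).
  assert (B2 := H1 n ltac:(unfold n; lia) a ltac:(pose proof (Rabs_pos s); lra)).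
  assert (B3 : Rabs (RInt (fun r => f r (v n r)) a s - RInt (fun r => f r (U r)) a s) <= (s - a) * (L * eps)).
  { apply abs_RInt_diff; auto.
    - apply fcomp_cont with L; auto.
    - apply fcomp_cont with L; auto.
    - intros r Hr. eapply Rle_trans; [apply Hlip|]. apply Rmult_le_compat_l; [lra|].
      apply H2; [unfold n; lia|].
      apply Rabs_le. pose proof (Rabs_pos a); pose proof (Rabs_pos s).
      pose proof (Rle_abs a); pose proof (Rle_abs s); pose proof (Rabs_maj2 a); pose proof (Rabs_maj2 s).
      lra. }
  replace (U s - U a - RInt (fun r => f r (U r)) a s) with
    (-(u n s - U s) + (u n a - U a) + (RInt (fun r => f r (v n r)) a s - RInt (fun r => f r (U r)) a s)).
  2:{ rewrite E. ring. }
  eapply Rle_trans; [apply Rabs_triang|].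
  eapply Rle_trans; [apply Rplus_le_compat_r, Rabs_triang|].
  rewrite Rabs_Ropp. nra.
Qed.

Lemma deriv_inteq (U : R -> R) (a c x : R) :
  (forall x, continuous U x) ->
  (forall s, a <= s -> U s = c + RInt (fun r => f r (U r)) a s) ->
  a < x -> is_derive U x (f x (U x)).
Proof.
  intros HU Heq Hx.
  apply (is_derive_ext_loc (fun s => c + RInt (fun r => f r (U r)) a s)).
  - exists (mkposreal (x - a) ltac:(lra)). intros y Hy.
    unfold ball in Hy; simpl in Hy; unfold AbsRing_ball, abs, minus, plus, opp in Hy; simpl in Hy.
    apply Rabs_lt_between in Hy. symmetry; apply Heq. lra.
  - replace (f x (U x)) with (plus zero (f x (U x))).
    2:{ unfold plus, zero; simpl; ring. }
    apply (is_derive_plus (K:=R_AbsRing) (V:=R_NormedModule) (fun _ => c) (fun s => RInt (fun r => f r (U r)) a s)).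
    apply (is_derive_const (K:=R_AbsRing) (V:=R_NormedModule)). apply (RInt_deriv (fun r => f r (U r))). apply fcomp_cont with L; auto.
Qed.

Variables t0 y0 : R.

Lemma pic_cauchy : ucauchy (pic f t0 y0).
Proof.
  intros A eps Heps.
  set (X := L * (Rabs A + Rabs t0)).
  assert (HX : 0 <= X) by (unfold X; apply Rmult_le_pos; [lra|]; pose proof (Rabs_pos A); pose proof (Rabs_pos t0); lra).
  set (Sm := fun n => sum_f_R0 (fun i => / INR (fact i) * X ^ i) n).
  assert (HM := M_nonneg f M Hbnd).
  assert (Key : forall n d t, t0 <= t <= A ->
     Rabs (pic f t0 y0 (n + d) t - pic f t0 y0 n t) <= M / L * (Sm (n + d)%nat - Sm n)).
  { intros n d t Ht. induction d.
    - rewrite Nat.add_0_r, Rminus_eq_0, Rabs_R0, Rminus_eq_0, Rmult_0_r. lra.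
    - replace (n + S d)%nat with (S (n + d)) by lia.
      replace (pic f t0 y0 (S (n + d)) t - pic f t0 y0 n t) with
        ((pic f t0 y0 (S (n + d)) t - pic f t0 y0 (n + d) t) + (pic f t0 y0 (n + d) t - pic f t0 y0 n t)) by ring.
      eapply Rle_trans; [apply Rabs_triang|].
      assert (Hq := pic_diff f L M HL Hlip Hbnd Hct t0 y0 (n + d) t ltac:(lra)).
      assert (Hq2 : qb L M t0 (n + d) t <= M / L * (/ INR (fact (S (n + d))) * X ^ (S (n + d)))).
      { unfold qb. unfold Rdiv. rewrite (Rmult_comm (/ INR _) (X ^ _)).
        rewrite !Rmult_assoc. apply Rmult_le_compat_l; [apply HM|].
        apply Rmult_le_compat_l; [left; apply Rinv_0_lt_compat; lra|].
        apply Rmult_le_compat_r; [left; apply Rinv_0_lt_compat, INR_fact_lt_0|].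
        apply pow_incr. split; [nra|]. unfold X. apply Rmult_le_compat_l; [lra|].
        pose proof (Rle_abs A); pose proof (Rabs_maj2 t0). lra. }
      unfold Sm at 1. rewrite tech5. fold (Sm (n + d)%nat).
      set (T1 := / INR (fact (S (n + d))) * X ^ S (n + d)) in *.
      replace (M / L * (Sm (n + d)%nat + T1 - Sm n)) with (M / L * T1 + M / L * (Sm (n + d)%nat - Sm n)) by ring.
      lra. }
  assert (Hc := exp_sum_cauchy X).
  destruct (Hc (eps * L / (M + 1))) as [N HN].
  { apply Rdiv_lt_0_compat; [nra|lra]. }
  exists N. intros n m Hn Hm t Ht.
  assert (Gen : forall n m, (N <= n)%nat -> (n <= m)%nat ->
    Rabs (pic f t0 y0 m t - pic f t0 y0 n t) <= eps).
  { intros n1 m1 Hn1 Hm1. destruct (Rle_dec t t0) as [Hle|Hgt].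
    - rewrite !pic_left by auto. rewrite Rminus_eq_0, Rabs_R0; lra.
    - replace m1 with (n1 + (m1 - n1))%nat by lia.
      eapply Rle_trans; [apply Key; pose proof (Rle_abs t); lra|].
      specialize (HN (n1 + (m1 - n1))%nat n1 ltac:(lia) ltac:(lia)).
      unfold R_dist in HN. fold (Sm (n1 + (m1 - n1))%nat) (Sm n1) in HN.
      assert (Hs : 0 <= Sm (n1 + (m1 - n1))%nat - Sm n1).
      { unfold Sm. clear - HX. induction (m1 - n1)%nat.
        - rewrite Nat.add_0_r; lra.
        - replace (n1 + S n)%nat with (S (n1 + n)) by lia. rewrite tech5.
          assert (0 <= / INR (fact (S (n1 + n))) * X ^ S (n1 + n)).
          { apply Rmult_le_pos; [left; apply Rinv_0_lt_compat, INR_fact_lt_0|apply pow_le; auto]. }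
          lra. }
      rewrite Rabs_right in HN by lra.
      apply Rle_trans with ((M + 1) / L * (Sm (n1 + (m1 - n1))%nat - Sm n1)).
      + unfold Rdiv. apply Rmult_le_compat_r; auto. apply Rmult_le_compat_r; [left; apply Rinv_0_lt_compat; lra|lra].
      + apply Rle_trans with ((M + 1) / L * (eps * L / (M + 1))).
        * apply Rmult_le_compat_l; [apply Rdiv_le_0_compat; lra|lra].
        * right; field; lra. }
  destruct (Nat.le_ge_cases n m) as [Hnm|Hnm].
  - rewrite Rabs_minus_sym. apply (Gen n m); auto.
  - apply (Gen m n); auto.
Qed.

Definition sol := lim_fun (pic f t0 y0).

Lemma sol_cont x : continuous sol x.
Proof. apply ucauchy_cont. apply pic_cauchy. intros n x0; eapply pic_cont; eauto. Qed.

Lemma sol_inteq s : t0 <= s -> sol s = y0 + RInt (fun r => f r (sol r)) t0 s.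
Proof.
  intros Hs.
  assert (E := inteq_limit (fun n => pic f t0 y0 (S n)) (pic f t0 y0) sol t0 O sol_cont).
  assert (Ha : sol t0 = y0).
  { unfold sol, lim_fun. rewrite (Lim_seq_ext _ (fun _ => y0)).
    rewrite Lim_seq_const; reflexivity. intros n; apply pic_left; lra. }
  rewrite <- Ha at 1. apply E; auto.
  - intros A eps Heps. destruct (ucauchy_unif _ pic_cauchy A eps Heps) as [N HN].
    exists N. intros n Hn t Ht. apply HN; auto.
  - intros A eps Heps. destruct (ucauchy_unif _ pic_cauchy A eps Heps) as [N HN].
    exists N. intros n Hn t Ht. apply HN; auto.
  - intros n x0; eapply pic_cont; eauto.
  - intros n _ s' Hs'. rewrite !pic_S by lra. rewrite RInt_point.
    unfold zero; simpl. ring.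
Qed.

Lemma sol_t0 : sol t0 = y0.
Proof.
  unfold sol, lim_fun. rewrite (Lim_seq_ext _ (fun _ => y0)).
  rewrite Lim_seq_const; reflexivity. intros n; apply pic_left; lra.
Qed.

Lemma sol_deriv x : t0 < x -> is_derive sol x (f x (sol x)).
Proof.
  intros Hx. apply deriv_inteq with t0 y0; auto.
  apply sol_cont. apply sol_inteq.
Qed.

End Sol.

Lemma deriv_pos_left (u : R -> R) x d : is_derive u x d -> 0 < d ->
  exists del, 0 < del /\ forall r, x - del < r < x -> u r < u x.
Proof.
  intros H Hd. apply is_derive_Reals in H.
  destruct (H d Hd) as [del Hdel].
  exists (pos del); split; [apply cond_pos|].
  intros r Hr. specialize (Hdel (r - x) ltac:(lra)).
  rewrite Rabs_left in Hdel by lra. specialize (Hdel ltac:(lra)).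
  replace (x + (r - x)) with r in Hdel by ring.
  apply Rabs_lt_between in Hdel.
  set (q := (u r - u x) / (r - x)) in Hdel.
  assert (E : u r - u x = q * (r - x)) by (unfold q; field; lra).
  assert (q * (r - x) < 0) by nra.
  lra.
Qed.

Lemma barrier_lo (u du : R -> R) (T0 T1 b : R) :
  (forall x, continuous u x) ->
  (forall x, T0 < x <= T1 -> is_derive u x (du x)) ->
  (forall x, T0 < x <= T1 -> u x = b -> 0 < du x) ->
  b < u T0 -> forall t, T0 <= t <= T1 -> b < u t.
Proof.
  intros Hc Hd Hp H0 t Ht. apply Rnot_le_lt; intro Hbad.
  set (E := fun s => T0 <= s <= t /\ forall r, T0 <= r <= s -> b < u r).
  assert (HEb : bound E) by (exists t; intros s [Hs _]; lra).
  assert (HEn : exists s, E s).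
  { exists T0. split; [lra|]. intros r Hr. replace r with T0 by lra; auto. }
  destruct (completeness E HEb HEn) as [x [Hub Hlub]].
  assert (HxT0 : T0 <= x) by (apply Hub; destruct HEn as [s Hs]; unfold E; split; [lra|]; intros r Hr; replace r with T0 by lra; auto).
  assert (Hxt : x <= t) by (apply Hlub; intros s [Hs _]; lra).
  assert (Hbelow : forall r, T0 <= r < x -> b < u r).
  { intros r Hr. destruct (Classical_Prop.classic (exists s, E s /\ r < s)) as [[s [[Hs1 Hs2] Hrs]]|Hno].
    - apply Hs2; lra.
    - exfalso. assert (x <= r); [|lra]. apply Hlub. intros s Hs.
      apply Rnot_lt_le; intro; apply Hno; eauto. }
  assert (Hge : b <= u x).
  { apply Rnot_lt_le; intro Hlt.
    destruct (Req_dec x T0) as [->|Hne]; [lra|].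
    destruct (proj1 (cont_eps u x) (Hc x) (b - u x)) as [d [Hd0 Hd1]]; [lra|].
    set (r := Rmax T0 (x - d/2)).
    assert (Hr : T0 <= r < x) by (unfold r; split; [apply Rmax_l|apply Rmax_lub_lt; lra]).
    assert (Hur := Hbelow r Hr).
    assert (Rabs (r - x) < d).
    { rewrite Rabs_left by lra. unfold r. assert (x - d/2 <= Rmax T0 (x - d/2)) by apply Rmax_r. lra. }
    specialize (Hd1 r H). apply Rabs_lt_between in Hd1. lra. }
  assert (Hle : u x <= b).
  { apply Rnot_lt_le; intro Hlt.
    assert (Hxt' : x < t) by (destruct (Req_dec x t) as [->|]; lra).
    destruct (proj1 (cont_eps u x) (Hc x) (u x - b)) as [d [Hd0 Hd1]]; [lra|].
    set (s := Rmin t (x + d/2)).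
    assert (Hs : x < s <= t) by (unfold s; split; [apply Rmin_glb_lt; lra|apply Rmin_l]).
    assert (E s).
    { split; [lra|]. intros r Hr. destruct (Rlt_le_dec r x) as [Hrx|Hrx]; [apply Hbelow; lra|].
      assert (Rabs (r - x) < d).
      { apply Rabs_lt_between. assert (Rmin t (x + d/2) <= x + d/2) by apply Rmin_r. fold s in H. lra. }
      specialize (Hd1 r H). apply Rabs_lt_between in Hd1. lra. }
    assert (s <= x) by (apply Hub; auto). lra. }
  assert (Hux : u x = b) by lra.
  assert (HxT : T0 < x) by (destruct (Req_dec x T0) as [->|]; lra).
  destruct (deriv_pos_left u x (du x) (Hd x ltac:(lra)) (Hp x ltac:(lra) Hux)) as [d [Hd0 Hd1]].
  set (r := Rmax T0 (x - d/2)).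
  assert (Hr : T0 <= r < x) by (unfold r; split; [apply Rmax_l|apply Rmax_lub_lt; lra]).
  assert (x - d < r) by (unfold r; assert (x - d/2 <= Rmax T0 (x - d/2)) by apply Rmax_r; lra).
  specialize (Hd1 r ltac:(lra)). specialize (Hbelow r Hr). lra.
Qed.

Lemma barrier_hi (u du : R -> R) (T0 T1 b : R) :
  (forall x, continuous u x) ->
  (forall x, T0 < x <= T1 -> is_derive u x (du x)) ->
  (forall x, T0 < x <= T1 -> u x = b -> du x < 0) ->
  u T0 < b -> forall t, T0 <= t <= T1 -> u t < b.
Proof.
  intros Hc Hd Hp H0 t Ht.
  assert (-b < - u t); [|lra].
  apply (barrier_lo (fun x => - u x) (fun x => - du x) T0 T1 (-b)); auto; try lra.
  - intros x. apply (continuous_opp (V:=R_NormedModule) u); auto.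
  - intros x Hx. apply (is_derive_opp (K:=R_AbsRing) (V:=R_NormedModule) u). auto.
  - intros x Hx He. assert (du x < 0) by (apply Hp; auto; lra). lra.
Qed.

Definition th (t : R) : R := 2 * atan (exp t).

Lemma th_deriv t : is_derive th t (sin (th t)).
Proof.
  unfold th.
  assert (H : is_derive (fun t => 2 * atan (exp t)) t (2 * (exp t * / (1 + (exp t)²)))).
  { apply is_derive_scal.
    apply (is_derive_comp atan exp t). apply is_derive_atan. apply is_derive_exp. }
  replace (sin (2 * atan (exp t))) with (2 * (exp t * / (1 + (exp t)²))); auto.
  rewrite sin_2a, sin_atan, cos_atan.
  assert (Hs : 0 < sqrt (1 + (exp t)²)) by (apply sqrt_lt_R0; unfold Rsqr; pose proof (exp_pos t); nra).
  assert (Hs2 : sqrt (1 + (exp t)²) * sqrt (1 + (exp t)²) = 1 + (exp t)²).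
  { apply sqrt_sqrt. unfold Rsqr; nra. }
  replace (2 * (exp t / sqrt (1 + (exp t)²)) * (1 / sqrt (1 + (exp t)²)))
    with (2 * exp t / (sqrt (1 + (exp t)²) * sqrt (1 + (exp t)²))) by (field; lra).
  rewrite Hs2. field. unfold Rsqr; pose proof (exp_pos t); nra.
Qed.

Lemma th_bounds t : 0 < th t < PI.
Proof.
  unfold th. split.
  - rewrite <- atan_0. pose proof (atan_increasing 0 (exp t) (exp_pos t)). rewrite atan_0 in *; lra.
  - pose proof (atan_bound (exp t)). lra.
Qed.

Definition sth t := sin (th t).
Definition cth t := cos (th t).

Lemma sth_pos t : 0 < sth t.
Proof. unfold sth. apply sin_gt_0; apply th_bounds. Qed.

Lemma sth_le1 t : sth t <= 1.
Proof. unfold sth. apply SIN_bound. Qed.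

Lemma cth_abs t : Rabs (cth t) <= 1.
Proof. unfold cth. apply Rabs_le. apply COS_bound. Qed.

Lemma sth_formula t : sth t = 2 * exp t / (1 + exp t * exp t).
Proof.
  unfold sth, th. rewrite sin_2a, sin_atan, cos_atan.
  assert (Hs : 0 < sqrt (1 + (exp t)²)) by (apply sqrt_lt_R0; unfold Rsqr; pose proof (exp_pos t); nra).
  assert (Hs2 : sqrt (1 + (exp t)²) * sqrt (1 + (exp t)²) = 1 + (exp t)²).
  { apply sqrt_sqrt. unfold Rsqr; nra. }
  replace (2 * (exp t / sqrt (1 + (exp t)²)) * (1 / sqrt (1 + (exp t)²)))
    with (2 * exp t / (sqrt (1 + (exp t)²) * sqrt (1 + (exp t)²))) by (field; lra).
  rewrite Hs2. unfold Rsqr. reflexivity.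
Qed.

Lemma sth_le_exp t : sth t <= 2 * exp t.
Proof.
  rewrite sth_formula. pose proof (exp_pos t).
  apply Rle_trans with (2 * exp t / 1); [|lra].
  unfold Rdiv. apply Rmult_le_compat_l; [lra|]. apply Rinv_le_contravar; nra.
Qed.

Lemma sth_le_expm t : sth t <= 2 * exp (- t).
Proof.
  rewrite sth_formula, exp_Ropp. pose proof (exp_pos t).
  apply Rmult_le_reg_r with (exp t * (1 + exp t * exp t)); [nra|].
  field_simplify; try nra.
Qed.

Lemma th_lim_m : is_lim th m_infty 0.
Proof.
  unfold th. replace 0 with (2 * atan 0) by (rewrite atan_0; ring).
  apply (is_lim_comp_continuous exp (fun y => 2 * atan y) m_infty 0).
  apply is_lim_exp_m.
  apply (ex_derive_continuous (K:=R_AbsRing) (V:=R_NormedModule)).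
  eexists. apply is_derive_scal. apply is_derive_atan.
Qed.

Lemma th_alt t : th t = PI - 2 * atan (exp (- t)).
Proof.
  unfold th. rewrite exp_Ropp, atan_inv by apply exp_pos. field.
Qed.

Lemma th_lim_p : is_lim th p_infty PI.
Proof.
  apply (is_lim_ext (fun t => PI - 2 * atan (exp (- t)))).
  { intros; rewrite th_alt; auto. }
  assert (H : is_lim (fun t => PI - 2 * atan (exp (- t))) p_infty (PI - 2 * atan 0)).
  2:{ rewrite atan_0, Rmult_0_r, Rminus_0_r in H. exact H. }
  apply (is_lim_comp_continuous (fun t => exp (- t)) (fun y => PI - 2 * atan y) p_infty 0).
  - apply (is_lim_comp exp (fun t => - t) p_infty 0 m_infty).
    apply is_lim_exp_m.
    apply (is_lim_opp (fun t => t) p_infty p_infty). apply is_lim_id.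
    exists 0. intros y _. discriminate.
  - apply (ex_derive_continuous (K:=R_AbsRing) (V:=R_NormedModule)).
    auto_derive. auto.
Qed.

Lemma sin_lip y z : Rabs (sin y - sin z) <= Rabs (y - z).
Proof.
  destruct (MVT_abs sin cos z y) as [c [Hc _]].
  { intros c _. apply derivable_pt_lim_sin. }
  rewrite Hc. pose proof (COS_bound c).
  rewrite <- (Rmult_1_l (Rabs (y - z))) at 2. apply Rmult_le_compat_r; [apply Rabs_pos|].
  apply Rabs_le; lra.
Qed.

Lemma cos_lip y z : Rabs (cos y - cos z) <= Rabs (y - z).
Proof.
  destruct (MVT_abs cos (fun x => - sin x) z y) as [c [Hc _]].
  { intros c _. apply derivable_pt_lim_cos. }
  rewrite Hc. pose proof (SIN_bound c).
  rewrite <- (Rmult_1_l (Rabs (y - z))) at 2. apply Rmult_le_compat_r; [apply Rabs_pos|].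
  apply Rabs_le; lra.
Qed.

Lemma cos_ge c : Rabs c <= 1/2 -> 3/4 <= cos c.
Proof.
  intros Hc. apply Rabs_le_between in Hc.
  destruct (pre_cos_bound c 0) as [H _]; try lra.
  unfold cos_approx, cos_term in H. simpl in H.
  assert (c * c <= 1/4) by nra. lra.
Qed.

Lemma sin_near0 y z : Rabs y <= 1/2 -> Rabs z <= 1/2 ->
  3/4 * (y - z)^2 <= (y - z) * (sin y - sin z).
Proof.
  intros Hy Hz.
  assert (Gen : forall y z, Rabs y <= 1/2 -> Rabs z <= 1/2 -> z < y ->
    3/4 * (y - z)^2 <= (y - z) * (sin y - sin z)).
  { clear. intros y z Hy Hz Hzy.
    destruct (MVT_cor2 sin cos z y Hzy) as [c [Hc1 Hc2]].
    { intros; apply derivable_pt_lim_sin. }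
    rewrite Hc1. assert (3/4 <= cos c).
    { apply cos_ge. apply Rabs_le_between in Hy, Hz. apply Rabs_le. lra. }
    replace ((y - z) * (cos c * (y - z))) with (cos c * (y - z)^2) by ring.
    apply Rmult_le_compat_r; [apply pow2_ge_0|lra]. }
  destruct (Rtotal_order y z) as [Hlt|[Heq|Hgt]].
  - replace ((y - z) * (sin y - sin z)) with ((z - y) * (sin z - sin y)) by ring.
    replace ((y - z)^2) with ((z - y)^2) by ring. apply Gen; auto.
  - subst. nra.
  - apply Gen; auto.
Qed.

Section Conc.
Variables a E : R.
Hypothesis Ha : 0 < a.
Hypothesis HE : 0 <= E <= 1.

Definition Fr (lam t y : R) := Theta_rhs a E lam (th t) y.
Definition Gp (lam t y : R) := - 2 * a * cth t * cos y + 2 * a * E * sth t * sin y + 2 * lam.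

Lemma F_decomp lam t y : Fr lam t y = - sin y + sth t * Gp lam t y.
Proof. unfold Fr, Theta_rhs, Gp, sth, cth. ring. Qed.

Definition Kp := 2 * a + 2 * a * E.

Lemma Kp_pos : 0 < Kp.
Proof. unfold Kp. nra. Qed.

Lemma Gp_bound lam t y : Rabs (Gp lam t y) <= Kp + 2 * Rabs lam.
Proof.
  unfold Gp, Kp.
  eapply Rle_trans; [apply Rabs_triang|].
  eapply Rle_trans; [apply Rplus_le_compat_r, Rabs_triang|].
  rewrite !Rabs_mult.
  pose proof (cth_abs t). pose proof (sth_le1 t). pose proof (sth_pos t).
  assert (Rabs (cos y) <= 1) by (apply Rabs_le; apply COS_bound).
  assert (Rabs (sin y) <= 1) by (apply Rabs_le; apply SIN_bound).
  pose proof (Rabs_pos (cos y)). pose proof (Rabs_pos (sin y)). pose proof (Rabs_pos (cth t)).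
  rewrite (Rabs_right 2) by lra.
  rewrite (Rabs_left (-2)) by lra. rewrite (Rabs_right a) by lra.
  rewrite (Rabs_right E) by lra. rewrite (Rabs_right (sth t)) by lra.
  assert (a * Rabs (cth t) * Rabs (cos y) <= a).
  { rewrite Rmult_assoc. rewrite <- (Rmult_1_r a) at 2. apply Rmult_le_compat_l; [lra|].
    rewrite <- (Rmult_1_r 1). apply Rmult_le_compat; lra. }
  assert (a * E * sth t * Rabs (sin y) <= a * E).
  { rewrite Rmult_assoc. rewrite <- (Rmult_1_r (a * E)) at 2. apply Rmult_le_compat_l; [nra|].
    rewrite <- (Rmult_1_r 1). apply Rmult_le_compat; lra. }
  lra.
Qed.

Lemma Gp_lip lam mu t y z :
  Rabs (Gp lam t y - Gp mu t z) <= Kp * Rabs (y - z) + 2 * Rabs (lam - mu).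
Proof.
  unfold Gp, Kp.
  replace (- 2 * a * cth t * cos y + 2 * a * E * sth t * sin y + 2 * lam -
     (- 2 * a * cth t * cos z + 2 * a * E * sth t * sin z + 2 * mu))
   with ((- 2 * a * cth t) * (cos y - cos z) + (2 * a * E * sth t) * (sin y - sin z) + 2 * (lam - mu)) by ring.
  eapply Rle_trans; [apply Rabs_triang|].
  eapply Rle_trans; [apply Rplus_le_compat_r, Rabs_triang|].
  rewrite !Rabs_mult.
  pose proof (cth_abs t). pose proof (sth_le1 t). pose proof (sth_pos t).
  pose proof (cos_lip y z). pose proof (sin_lip y z).
  pose proof (Rabs_pos (y - z)). pose proof (Rabs_pos (cos y - cos z)). pose proof (Rabs_pos (sin y - sin z)).
  rewrite (Rabs_right 2) by lra.
  rewrite (Rabs_left (-2)) by lra. rewrite (Rabs_right a) by lra.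
  rewrite (Rabs_right E) by lra. rewrite (Rabs_right (sth t)) by lra.
  pose proof (Rabs_pos (cth t)).
  assert (a * Rabs (cth t) * Rabs (cos y - cos z) <= a * Rabs (y - z)).
  { rewrite Rmult_assoc. apply Rmult_le_compat_l; [lra|].
    rewrite <- (Rmult_1_l (Rabs (y - z))). apply Rmult_le_compat; lra. }
  assert (a * E * sth t * Rabs (sin y - sin z) <= a * E * Rabs (y - z)).
  { rewrite Rmult_assoc. apply Rmult_le_compat_l; [nra|].
    rewrite <- (Rmult_1_l (Rabs (y - z))). apply Rmult_le_compat; lra. }
  lra.
Qed.

Definition Lc := 1 + Kp.

Lemma F_lip lam t y z : Rabs (Fr lam t y - Fr lam t z) <= Lc * Rabs (y - z).
Proof.
  rewrite !F_decomp.
  replace (- sin y + sth t * Gp lam t y - (- sin z + sth t * Gp lam t z))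
    with (- (sin y - sin z) + sth t * (Gp lam t y - Gp lam t z)) by ring.
  eapply Rle_trans; [apply Rabs_triang|]. rewrite Rabs_Ropp, Rabs_mult.
  pose proof (Gp_lip lam lam t y z). rewrite Rminus_eq_0, Rabs_R0 in H.
  pose proof (sth_le1 t). pose proof (sth_pos t). rewrite (Rabs_right (sth t)) by lra.
  pose proof (sin_lip y z). pose proof (Rabs_pos (Gp lam t y - Gp lam t z)).
  unfold Lc. nra.
Qed.

Lemma F_bound lam t y : Rabs (Fr lam t y) <= 1 + Kp + 2 * Rabs lam.
Proof.
  rewrite F_decomp. eapply Rle_trans; [apply Rabs_triang|]. rewrite Rabs_Ropp, Rabs_mult.
  pose proof (Gp_bound lam t y). pose proof (sth_le1 t). pose proof (sth_pos t).
  rewrite (Rabs_right (sth t)) by lra. pose proof (SIN_bound y).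
  assert (Rabs (sin y) <= 1) by (apply Rabs_le; lra).
  pose proof (Rabs_pos (Gp lam t y)). nra.
Qed.

Lemma F_cont lam y t : continuous (fun s => Fr lam s y) t.
Proof.
  apply (ex_derive_continuous (K:=R_AbsRing) (V:=R_NormedModule)).
  unfold Fr, Theta_rhs. auto_derive.
  assert (ex_derive th t) by (eexists; apply th_deriv). tauto.
Qed.

End Conc.

Definition hfun (u v : R -> R) (k c : R) (t : R) := ((u t - v t)^2 + c) * exp (k * t).

Lemma hfun_deriv (u v : R -> R) du dv k c x :
  is_derive u x du -> is_derive v x dv ->
  is_derive (hfun u v k c) x (exp (k * x) * (2 * (u x - v x) * (du - dv) + k * ((u x - v x)^2 + c))).
Proof.
  intros Hu Hv.
  assert (Hd : is_derive (fun t => u t - v t) x (du - dv)).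
  { apply (is_derive_minus (K:=R_AbsRing) (V:=R_NormedModule) u v); auto. }
  assert (Hp := is_derive_pow (fun t => u t - v t) 2 x (du - dv) Hd).
  assert (Hp2 : is_derive (fun t => (u t - v t)^2 + c) x (INR 2 * (du - dv) * (u x - v x) ^ Init.Nat.pred 2 + 0)).
  { apply (is_derive_plus (K:=R_AbsRing) (V:=R_NormedModule) (fun t => (u t - v t)^2) (fun _ => c)); auto.
    apply (is_derive_const (K:=R_AbsRing) (V:=R_NormedModule)). }
  assert (He : is_derive (fun t => exp (k * t)) x (k * exp (k * x))).
  { auto_derive; auto; ring. }
  assert (Hm := is_derive_mult (K:=R_AbsRing) _ _ x _ _ Hp2 He).
  unfold hfun. eapply is_derive_ext; [|eapply filterdiff_ext_lin; [apply Hm; intros; apply Rmult_comm|]].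
  - intros t; reflexivity.
  - intros y. unfold scal, plus, mult; simpl; unfold mult; simpl. simpl INR. ring.
Qed.

Lemma hfun_cont (u v : R -> R) k c x :
  continuous u x -> continuous v x -> continuous (hfun u v k c) x.
Proof.
  intros Hu Hv. unfold hfun.
  apply (continuous_mult (K:=R_AbsRing) (fun t => (u t - v t)^2 + c) (fun t => exp (k * t))).
  - apply (continuous_plus (V:=R_NormedModule) (fun t => (u t - v t)^2) (fun _ => c)); [|apply continuous_const].
    apply (continuous_comp (fun t => u t - v t) (fun y => y ^ 2)).
    + apply (continuous_minus (V:=R_NormedModule) u v); auto.
    + apply (ex_derive_continuous (K:=R_AbsRing) (V:=R_NormedModule)). auto_derive. auto.
  - apply (ex_derive_continuous (K:=R_AbsRing) (V:=R_NormedModule)). auto_derive. auto.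
Qed.

Lemma hfun_mono (u v du dv : R -> R) k c T0 T1 : T0 <= T1 ->
  (forall x, continuous u x) -> (forall x, continuous v x) ->
  (forall x, T0 < x <= T1 -> is_derive u x (du x) /\ is_derive v x (dv x)) ->
  (forall x, T0 < x < T1 -> 2 * (u x - v x) * (du x - dv x) + k * ((u x - v x)^2 + c) <= 0) ->
  hfun u v k c T1 <= hfun u v k c T0.
Proof.
  intros H01 Hu Hv Hd Hn.
  apply mono_deriv with (dh := fun x => exp (k * x) * (2 * (u x - v x) * (du x - dv x) + k * ((u x - v x)^2 + c))); auto.
  - intros x Hx. destruct (Hd x Hx). apply hfun_deriv; auto.
  - apply hfun_cont; auto.
  - intros x Hx. specialize (Hn x Hx). pose proof (exp_pos (k * x)).
    rewrite <- (Rmult_0_r (exp (k * x))). apply Rmult_le_compat_l; lra.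
Qed.

Lemma sth_small_m c : 0 < c -> exists T, forall t, t <= T -> sth t <= c.
Proof.
  intros Hc. exists (ln (c / 2)). intros t Ht.
  eapply Rle_trans; [apply sth_le_exp|].
  assert (exp t <= c / 2).
  { rewrite <- (exp_ln (c/2)) by lra. destruct (Req_dec t (ln (c/2))) as [->|]; [lra|].
    left; apply exp_increasing; lra. }
  lra.
Qed.

Lemma sth_small_p c : 0 < c -> exists T, forall t, T <= t -> sth t <= c.
Proof.
  intros Hc. exists (- ln (c / 2)). intros t Ht.
  eapply Rle_trans; [apply sth_le_expm|].
  assert (exp (- t) <= c / 2).
  { rewrite <- (exp_ln (c/2)) by lra. destruct (Req_dec (- t) (ln (c/2))) as [->|]; [lra|].
    left; apply exp_increasing; lra. }
  lra.
Qed.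

Lemma abs_sq x : Rabs x * Rabs x = x^2.
Proof. rewrite <- (pow2_abs x). ring. Qed.

Section Wsec.
Variables a E Lam : R.
Hypothesis Ha : 0 < a.
Hypothesis HE : 0 <= E <= 1.
Hypothesis HLam : 0 <= Lam.

Definition Kb := Kp a E + 2 * Lam.

Lemma Kb_pos : 0 < Kb.
Proof. unfold Kb. pose proof (Kp_pos a E Ha HE). lra. Qed.

Lemma pert_bound lam t y : Rabs lam <= Lam -> Rabs (sth t * Gp a E lam t y) <= sth t * Kb.
Proof.
  intros Hl. rewrite Rabs_mult. pose proof (sth_pos t). rewrite (Rabs_right (sth t)) by lra.
  apply Rmult_le_compat_l; [lra|]. eapply Rle_trans; [apply Gp_bound; auto|]. unfold Kb; lra.
Qed.

Definition Wn (lam : R) (n : nat) := sol (Fr a E lam) (- INR n) 0.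

Lemma Lc_pos : 0 < Lc a E.
Proof. unfold Lc. pose proof (Kp_pos a E Ha HE). lra. Qed.

Lemma Wn_cont lam n x : continuous (Wn lam n) x.
Proof.
  unfold Wn. apply (sol_cont (Fr a E lam) (Lc a E) (1 + Kp a E + 2 * Rabs lam)).
  apply Lc_pos. apply F_lip; auto. apply F_bound; auto. apply F_cont. auto.
Qed.

Lemma Wn_deriv lam n x : - INR n < x -> is_derive (Wn lam n) x (Fr a E lam x (Wn lam n x)).
Proof.
  intros Hx. unfold Wn. apply (sol_deriv (Fr a E lam) (Lc a E) (1 + Kp a E + 2 * Rabs lam)); auto.
  apply Lc_pos. apply F_lip; auto. apply F_bound; auto. apply F_cont. all: auto.
Qed.

Lemma Wn_inteq lam n s : - INR n <= s ->
  Wn lam n s = 0 + RInt (fun r => Fr a E lam r (Wn lam n r)) (- INR n) s.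
Proof.
  intros Hs. unfold Wn. apply (sol_inteq (Fr a E lam) (Lc a E) (1 + Kp a E + 2 * Rabs lam)); auto.
  apply Lc_pos. apply F_lip; auto. apply F_bound; auto. apply F_cont. all: auto.
Qed.

Lemma Wn_start lam n : Wn lam n (- INR n) = 0.
Proof. rewrite Wn_inteq by lra. rewrite RInt_point. unfold zero; simpl; ring. Qed.

Lemma Wn_small lam eps T n : Rabs lam <= Lam -> 0 < eps <= 1 ->
  (forall t, t <= T -> sth t * Kb < sin eps) -> - INR n <= T ->
  forall t, - INR n <= t <= T -> Rabs (Wn lam n t) < eps.
Proof.
  intros Hl He HT Hn t Ht. apply Rabs_def1.
  - apply (barrier_hi (Wn lam n) (fun x => Fr a E lam x (Wn lam n x)) (- INR n) T eps); auto.
    + apply Wn_cont.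
    + intros x Hx; apply Wn_deriv; lra.
    + intros x Hx Hw. rewrite Hw, F_decomp.
      pose proof (pert_bound lam x eps Hl). apply Rabs_le_between in H.
      specialize (HT x ltac:(lra)). lra.
    + rewrite Wn_start; lra.
  - apply (barrier_lo (Wn lam n) (fun x => Fr a E lam x (Wn lam n x)) (- INR n) T (- eps)); auto.
    + apply Wn_cont.
    + intros x Hx; apply Wn_deriv; lra.
    + intros x Hx Hw. rewrite Hw, F_decomp, sin_neg.
      pose proof (pert_bound lam x (- eps) Hl). apply Rabs_le_between in H.
      specialize (HT x ltac:(lra)). lra.
    + rewrite Wn_start; lra.
Qed.

Lemma diff_decomp lam mu x u v :
  Fr a E lam x u - Fr a E mu x v = - (sin u - sin v) + sth x * (Gp a E lam x u - Gp a E mu x v).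
Proof. rewrite !F_decomp. ring. Qed.

Lemma contr_ineq lam mu x u v : sth x * Kp a E <= 1/8 -> Rabs u <= 1/2 -> Rabs v <= 1/2 ->
  2 * (u - v) * (Fr a E lam x u - Fr a E mu x v) + 1 * ((u - v)^2 + - (16 * (lam - mu)^2)) <= 0.
Proof.
  intros Hs Hu Hv. rewrite diff_decomp.
  pose proof (sin_near0 u v Hu Hv).
  pose proof (Gp_lip a E Ha HE lam mu x u v).
  pose proof (sth_pos x). pose proof (sth_le1 x).
  set (D := u - v) in *. set (g := Gp a E lam x u - Gp a E mu x v) in *. clearbody D g.
  assert (Hm2 : 2 * D * (sth x * g) <= 2 * sth x * Rabs D * (Kp a E * Rabs D + 2 * Rabs (lam - mu))).
  { replace (2 * D * (sth x * g)) with ((2 * sth x) * (D * g)) by ring.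
    rewrite (Rmult_assoc (2 * sth x)).
    apply Rmult_le_compat_l; [lra|].
    eapply Rle_trans; [apply Rle_abs|]. rewrite Rabs_mult.
    apply Rmult_le_compat_l; [apply Rabs_pos|]. auto. }
  assert (HD2 := abs_sq D).
  pose proof (Rabs_pos D). pose proof (Rabs_pos (lam - mu)).
  assert (HL2 := abs_sq (lam - mu)).
  assert (2 * sth x * Kp a E * D^2 <= 1/4 * D^2).
  { replace (2 * sth x * Kp a E * D^2) with (2 * (sth x * Kp a E) * D^2) by ring.
    apply Rle_trans with (2 * (1/8) * D^2); [apply Rmult_le_compat_r; [apply pow2_ge_0|lra] | lra]. }
  assert (4 * sth x * Rabs D * Rabs (lam - mu) <= 4 * Rabs D * Rabs (lam - mu)).
  { pose proof (Rmult_le_pos _ _ (Rabs_pos D) (Rabs_pos (lam - mu))).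
    replace (4 * sth x * Rabs D * Rabs (lam - mu)) with (4 * sth x * (Rabs D * Rabs (lam - mu))) by ring.
    replace (4 * Rabs D * Rabs (lam - mu)) with (4 * (Rabs D * Rabs (lam - mu))) by ring. nra. }
  assert (4 * Rabs D * Rabs (lam - mu) <= 1/4 * D^2 + 16 * (lam - mu)^2).
  { rewrite <- HD2, <- HL2. pose proof (pow2_ge_0 (Rabs D / 2 - 4 * Rabs (lam - mu))). nra. }
  nra.
Qed.

Definition kf := 2 * Lc a E + 2.

Lemma fwd_ineq lam mu x u v :
  2 * (u - v) * (Fr a E lam x u - Fr a E mu x v) + - kf * ((u - v)^2 + 2 * (lam - mu)^2 / kf) <= 0.
Proof.
  rewrite diff_decomp.
  pose proof (sin_lip u v).
  pose proof (Gp_lip a E Ha HE lam mu x u v).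
  pose proof (sth_pos x). pose proof (sth_le1 x).
  assert (Hk : 0 < kf) by (unfold kf; pose proof Lc_pos; lra).
  set (D := u - v) in *. set (g := Gp a E lam x u - Gp a E mu x v) in *. clearbody D g.
  assert (Hm2 : 2 * D * (- (sin u - sin v) + sth x * g) <= 2 * Rabs D * (Rabs D + sth x * (Kp a E * Rabs D + 2 * Rabs (lam - mu)))).
  { apply Rle_trans with (2 * (Rabs D * Rabs (- (sin u - sin v) + sth x * g))).
    - rewrite Rmult_assoc. apply Rmult_le_compat_l; [lra|]. rewrite <- Rabs_mult. apply Rle_abs.
    - rewrite (Rmult_assoc 2). apply Rmult_le_compat_l; [lra|].
      apply Rmult_le_compat_l; [apply Rabs_pos|].
      eapply Rle_trans; [apply Rabs_triang|]. rewrite Rabs_Ropp, Rabs_mult, (Rabs_right (sth x)) by lra.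
      apply Rplus_le_compat; auto. apply Rmult_le_compat_l; lra. }
  assert (HD2 := abs_sq D).
  pose proof (Rabs_pos D). pose proof (Rabs_pos (lam - mu)).
  assert (HL2 := abs_sq (lam - mu)).
  pose proof (Kp_pos a E Ha HE).
  assert (2 * sth x * Kp a E * D^2 <= 2 * Kp a E * D^2).
  { pose proof (Rmult_le_pos _ _ (Rlt_le _ _ H5) (pow2_ge_0 D)).
    replace (2 * sth x * Kp a E * D^2) with (2 * sth x * (Kp a E * D^2)) by ring.
    replace (2 * Kp a E * D^2) with (2 * (Kp a E * D^2)) by ring. nra. }
  assert (4 * sth x * Rabs D * Rabs (lam - mu) <= 4 * Rabs D * Rabs (lam - mu)).
  { pose proof (Rmult_le_pos _ _ (Rabs_pos D) (Rabs_pos (lam - mu))).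
    replace (4 * sth x * Rabs D * Rabs (lam - mu)) with (4 * sth x * (Rabs D * Rabs (lam - mu))) by ring.
    replace (4 * Rabs D * Rabs (lam - mu)) with (4 * (Rabs D * Rabs (lam - mu))) by ring. nra. }
  assert (4 * Rabs D * Rabs (lam - mu) <= 2 * D^2 + 2 * (lam - mu)^2).
  { rewrite <- HD2, <- HL2. pose proof (pow2_ge_0 (Rabs D - Rabs (lam - mu))). nra. }
  replace (- kf * (D ^ 2 + 2 * (lam - mu) ^ 2 / kf)) with (- kf * D^2 - 2 * (lam - mu)^2) by (field; lra).
  rewrite <- HD2 in *. unfold kf, Lc. 
  assert (2 * Rabs D * (Rabs D + sth x * (Kp a E * Rabs D + 2 * Rabs (lam - mu)))
     = 2 * (Rabs D * Rabs D) + 2 * sth x * Kp a E * (Rabs D * Rabs D) + 4 * sth x * Rabs D * Rabs (lam - mu)) by ring.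
  lra.
Qed.

Lemma sin_half_pos : 0 < sin (1/2).
Proof. apply sin_gt_0; [lra|]. pose proof PI2_3_2. lra. Qed.

Lemma Tstar_ex : exists T, forall t, t <= T -> sth t * Kb < sin (1/2) /\ sth t * Kp a E <= 1/8.
Proof.
  pose proof sin_half_pos. pose proof Kb_pos. pose proof (Kp_pos a E Ha HE).
  set (c := Rmin (sin (1/2) / (2 * Kb)) (1 / (8 * Kp a E))).
  assert (Hc : 0 < c) by (unfold c; apply Rmin_glb_lt; apply Rdiv_lt_0_compat; lra).
  destruct (sth_small_m c Hc) as [T HT]. exists T. intros t Ht.
  specialize (HT t Ht). pose proof (sth_pos t).
  assert (c <= sin (1/2) / (2 * Kb)) by apply Rmin_l.
  assert (c <= 1 / (8 * Kp a E)) by apply Rmin_r.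
  split.
  - apply Rle_lt_trans with (sin (1/2) / (2 * Kb) * Kb).
    + apply Rmult_le_compat_r; lra.
    + replace (sin (1/2) / (2 * Kb) * Kb) with (sin (1/2) / 2) by (field; lra). lra.
  - apply Rle_trans with (1 / (8 * Kp a E) * Kp a E).
    + apply Rmult_le_compat_r; lra.
    + right; field; lra.
Qed.

Lemma sq_le_abs x e : 0 <= e -> x^2 <= e^2 -> Rabs x <= e.
Proof.
  intros He H. apply Rnot_lt_le; intro Hlt. rewrite <- abs_sq in H.
  assert (e * e < Rabs x * Rabs x) by nra. simpl in H. lra.
Qed.

Lemma Wn_cauchy lam : Rabs lam <= Lam -> ucauchy (Wn lam).
Proof.
  intros Hl. destruct Tstar_ex as [T HT].
  intros A eps Heps.
  set (C := 1/4 * (exp A + exp (- T + kf * (A - T)))).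
  assert (HC : 0 < C) by (unfold C; pose proof (exp_pos A); pose proof (exp_pos (- T + kf * (A - T))); lra).
  destruct (INR_unbounded (Rmax (Rmax A (- T)) (ln (C / (eps^2))))) as [N HN].
  exists N.
  assert (Main : forall n m, (N <= m)%nat -> (m <= n)%nat -> forall t, Rabs t <= A ->
     Rabs (Wn lam n t - Wn lam m t) <= eps).
  { intros n m Hm Hmn t Ht.
    assert (HmR : INR N <= INR m) by (apply le_INR; auto).
    assert (HnR : INR m <= INR n) by (apply le_INR; auto).
    assert (HN1 : A < INR m /\ - T < INR m /\ ln (C / eps^2) < INR m).
    { pose proof (Rmax_l (Rmax A (- T)) (ln (C / (eps^2)))).
      pose proof (Rmax_r (Rmax A (- T)) (ln (C / (eps^2)))).
      pose proof (Rmax_l A (- T)). pose proof (Rmax_r A (- T)). lra. }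
    assert (Contr : forall s, - INR m <= s <= T ->
       hfun (Wn lam n) (Wn lam m) 1 (- (16 * (lam - lam)^2)) s <=
       hfun (Wn lam n) (Wn lam m) 1 (- (16 * (lam - lam)^2)) (- INR m)).
    { intros s Hs.
      apply hfun_mono with (du := fun x => Fr a E lam x (Wn lam n x)) (dv := fun x => Fr a E lam x (Wn lam m x)).
      - lra.
      - apply Wn_cont.
      - apply Wn_cont.
      - intros x Hx. split; apply Wn_deriv; lra.
      - intros x Hx. apply contr_ineq.
        + apply (HT x ltac:(lra)).
        + left. apply (Wn_small lam (1/2) T n Hl ltac:(lra)); try lra.
          intros; apply HT; auto.
        + left. apply (Wn_small lam (1/2) T m Hl ltac:(lra)); try lra.
          intros; apply HT; auto. }
    assert (Hstart : Rabs (Wn lam n (- INR m)) < 1/2).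
    { apply (Wn_small lam (1/2) T n Hl ltac:(lra)); try lra. intros; apply HT; auto. }
    assert (Bnd : forall s, - INR m <= s <= T -> (Wn lam n s - Wn lam m s)^2 <= 1/4 * exp (- INR m) * exp (- s)).
    { intros s Hs. specialize (Contr s Hs). unfold hfun in Contr.
      rewrite Wn_start in Contr. replace (lam - lam) with 0 in Contr by ring.
      replace (- (16 * 0 ^ 2)) with 0 in Contr by ring. rewrite !Rplus_0_r, Rminus_0_r, !Rmult_1_l in Contr.
      assert (Wn lam n (- INR m) ^ 2 <= 1/4).
      { rewrite <- abs_sq. pose proof (Rabs_pos (Wn lam n (- INR m))). simpl. nra. }
      apply Rmult_le_reg_r with (exp s); [apply exp_pos|].
      replace (1 / 4 * exp (- INR m) * exp (- s) * exp s) with (1/4 * exp (- INR m)).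
      2:{ rewrite Rmult_assoc, <- exp_plus. replace (- s + s) with 0 by ring. rewrite exp_0. ring. }
      eapply Rle_trans; [apply Contr|]. apply Rmult_le_compat_r; [left; apply exp_pos|lra]. }
    assert (Hexp : C * exp (- INR m) <= eps^2).
    { assert (C / eps^2 < exp (INR m)).
      { rewrite <- (exp_ln (C / eps^2)) by (apply Rdiv_lt_0_compat; nra). apply exp_increasing. lra. }
      rewrite exp_Ropp. apply Rmult_le_reg_r with (exp (INR m)); [apply exp_pos|].
      rewrite Rmult_assoc, Rinv_l by (apply Rgt_not_eq, exp_pos).
      apply Rlt_le. apply Rmult_lt_reg_r with (/ eps^2).
      { apply Rinv_0_lt_compat; nra. }
      replace (eps ^ 2 * exp (INR m) * / eps ^ 2) with (exp (INR m)) by (field; lra). lra. }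
    apply sq_le_abs; [lra|].
    pose proof (exp_pos (- INR m)).
    apply Rabs_le_between in Ht.
    destruct (Rle_dec t T) as [HtT|HtT].
    - eapply Rle_trans; [apply Bnd; lra|].
      apply Rle_trans with (C * exp (- INR m)); [|auto].
      unfold C. assert (exp (- t) <= exp A) by (destruct (Req_dec (- t) A) as [->|]; [lra|left; apply exp_increasing; lra]).
      pose proof (exp_pos (- T + kf * (A - T))). nra.
    -
      assert (Fwd : hfun (Wn lam n) (Wn lam m) (- kf) (2 * (lam - lam)^2 / kf) t <=
                    hfun (Wn lam n) (Wn lam m) (- kf) (2 * (lam - lam)^2 / kf) T).
      { apply hfun_mono with (du := fun x => Fr a E lam x (Wn lam n x)) (dv := fun x => Fr a E lam x (Wn lam m x)).
        - lra.
        - apply Wn_cont.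
        - apply Wn_cont.
        - intros x Hx. split; apply Wn_deriv; lra.
        - intros x Hx. apply fwd_ineq. }
      unfold hfun in Fwd. replace (lam - lam) with 0 in Fwd by ring.
      replace (2 * 0 ^ 2 / kf) with 0 in Fwd by (unfold kf; pose proof Lc_pos; field; lra).
      rewrite !Rplus_0_r in Fwd.
      assert (HT2 := Bnd T ltac:(lra)).
      assert (Hk : 0 < kf) by (unfold kf; pose proof Lc_pos; lra).
      apply Rmult_le_reg_r with (exp (- kf * t)); [apply exp_pos|].
      eapply Rle_trans; [apply Fwd|].
      apply Rle_trans with (1 / 4 * exp (- INR m) * exp (- T) * exp (- kf * T)).
      { apply Rmult_le_compat_r; [left; apply exp_pos|auto]. }
      apply Rle_trans with (C * exp (- INR m) * exp (- kf * t)).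
      2:{ apply Rmult_le_compat_r; [left; apply exp_pos|auto]. }
      unfold C.
      assert (E1 : exp (- T) * exp (- kf * T) = exp (- T + kf * (A - T)) * exp (- kf * A)).
      { rewrite <- !exp_plus. f_equal. ring. }
      assert (E2 : exp (- kf * A) <= exp (- kf * t)).
      { destruct (Req_dec (- kf * A) (- kf * t)) as [->|]; [lra|]. left; apply exp_increasing. nra. }
      pose proof (exp_pos (- kf * A)). pose proof (exp_pos (- T + kf * (A - T))). pose proof (exp_pos A).
      pose proof (exp_pos (- kf * t)).
      replace (1 / 4 * exp (- INR m) * exp (- T) * exp (- kf * T)) with
        (1 / 4 * exp (- INR m) * (exp (- T + kf * (A - T)) * exp (- kf * A))) by (rewrite <- E1; ring).
      assert (exp (- T + kf * (A - T)) * exp (- kf * A) <= (exp A + exp (- T + kf * (A - T))) * exp (- kf * t)) by nra.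
      nra. }
  intros n m Hn Hm t Ht.
  destruct (Nat.le_ge_cases m n) as [Hmn|Hmn].
  - apply Main; auto.
  - rewrite Rabs_minus_sym. apply Main; auto.
Qed.

Definition W (lam : R) := lim_fun (Wn lam).

Lemma lim_fun_bound (u : nat -> R -> R) t eps N : ucauchy u ->
  (forall n, (N <= n)%nat -> Rabs (u n t) <= eps) -> Rabs (lim_fun u t) <= eps.
Proof.
  intros Hu Hb. apply Rnot_lt_le; intro Hlt.
  destruct (ucauchy_unif u Hu (Rabs t) ((Rabs (lim_fun u t) - eps)/2)) as [N1 HN1]; [lra|].
  specialize (HN1 (max N N1) ltac:(lia) t (Rle_refl _)).
  specialize (Hb (max N N1) ltac:(lia)).
  assert (Rabs (lim_fun u t) <= Rabs (u (max N N1) t) + Rabs (u (max N N1) t - lim_fun u t)).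
  { replace (lim_fun u t) with (u (max N N1) t - (u (max N N1) t - lim_fun u t)) at 1 by ring.
    eapply Rle_trans; [apply Rabs_triang|]. rewrite Rabs_Ropp. lra. }
  lra.
Qed.

Lemma W_cont lam : Rabs lam <= Lam -> forall x, continuous (W lam) x.
Proof.
  intros Hl x. apply ucauchy_cont. apply Wn_cauchy; auto. intros n y; apply Wn_cont.
Qed.

Lemma W_deriv lam : Rabs lam <= Lam -> forall x, is_derive (W lam) x (Fr a E lam x (W lam x)).
Proof.
  intros Hl x.
  destruct (INR_unbounded (1 - x)) as [m Hm].
  assert (HC := Wn_cauchy lam Hl).
  apply (deriv_inteq (Fr a E lam) (Lc a E) Lc_pos (F_lip a E Ha HE lam) (F_cont a E HE lam) (W lam) (x - 1) (W lam (x - 1)) x).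
  - apply W_cont; auto.
  - intros s Hs.
    apply (inteq_limit (Fr a E lam) (Lc a E) Lc_pos (F_lip a E Ha HE lam) (F_cont a E HE lam) (Wn lam) (Wn lam) (W lam) (x - 1) m).
    + apply W_cont; auto.
    + intros A eps Heps. destruct (ucauchy_unif _ HC A eps Heps) as [N HN]. exists N. auto.
    + intros A eps Heps. destruct (ucauchy_unif _ HC A eps Heps) as [N HN]. exists N. auto.
    + intros n y; apply Wn_cont.
    + intros n Hn s' Hs'.
      assert (HnR : INR m <= INR n) by (apply le_INR; auto).
      rewrite (Wn_inteq lam n s') by lra. rewrite (Wn_inteq lam n (x - 1)) by lra.
      rewrite !Rplus_0_l.
      assert (Hg : forall y, continuous (fun r => Fr a E lam r (Wn lam n r)) y).
      { apply fcomp_cont with (Lc a E). apply Lc_pos. apply F_lip; auto. apply F_cont; auto. intros; apply Wn_cont. }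
      rewrite <- (RInt_Chasles (V:=R_CompleteNormedModule) _ (- INR n) (x - 1) s'); try apply exRInt; auto.
    + auto.
  - lra.
Qed.

Lemma W_small lam eps T : Rabs lam <= Lam -> 0 < eps <= 1 ->
  (forall t, t <= T -> sth t * Kb < sin eps) -> forall t, t <= T -> Rabs (W lam t) <= eps.
Proof.
  intros Hl He HT t Ht.
  destruct (INR_unbounded (- t)) as [N HN].
  apply lim_fun_bound with N. apply Wn_cauchy; auto.
  intros n Hn. assert (INR N <= INR n) by (apply le_INR; auto).
  left. apply (Wn_small lam eps T n Hl He HT); lra.
Qed.

Lemma W_lim_m lam : Rabs lam <= Lam -> is_lim (W lam) m_infty 0.
Proof.
  intros Hl. apply is_lim_spec. intros eps.
  set (e := Rmin (eps / 2) 1).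
  assert (He : 0 < e <= 1) by (unfold e; split; [apply Rmin_glb_lt; [pose proof (cond_pos eps); lra|lra]|apply Rmin_r]).
  assert (Hse : 0 < sin e) by (apply sin_gt_0; [lra|pose proof PI2_3_2; lra]).
  destruct (sth_small_m (sin e / (2 * Kb))) as [T HT].
  { apply Rdiv_lt_0_compat; [lra|pose proof Kb_pos; lra]. }
  exists T. intros t Ht.
  assert (Hb : Rabs (W lam t) <= e).
  { apply (W_small lam e T Hl He); [|lra].
    intros t' Ht'. specialize (HT t' Ht'). pose proof Kb_pos. pose proof (sth_pos t').
    apply Rle_lt_trans with (sin e / (2 * Kb) * Kb); [apply Rmult_le_compat_r; lra|].
    replace (sin e / (2 * Kb) * Kb) with (sin e / 2) by (field; lra). lra. }
  rewrite Rminus_0_r. assert (e <= eps / 2) by apply Rmin_l. pose proof (cond_pos eps). lra.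
Qed.

Lemma W_half lam : Rabs lam <= Lam -> exists T, forall t, t <= T ->
  Rabs (W lam t) <= 1/2 /\ sth t * Kp a E <= 1/8.
Proof.
  intros Hl. destruct Tstar_ex as [T HT]. exists T. intros t Ht. split; [|apply HT; auto].
  apply (W_small lam (1/2) T Hl ltac:(lra)); auto. intros; apply HT; auto.
Qed.

Lemma W_param T : exists C, 0 <= C /\ forall lam mu, Rabs lam <= Lam -> Rabs mu <= Lam ->
  (W lam T - W mu T)^2 <= C * (lam - mu)^2.
Proof.
  destruct Tstar_ex as [Ts HTs].
  assert (Hk : 0 < kf) by (unfold kf; pose proof Lc_pos; lra).
  assert (Half : forall lam t, Rabs lam <= Lam -> t <= Ts -> Rabs (W lam t) <= 1/2).
  { intros lam t Hl Ht. apply (W_small lam (1/2) Ts Hl ltac:(lra)); auto. intros; apply HTs; auto. }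
  assert (Step1 : forall lam mu s, Rabs lam <= Lam -> Rabs mu <= Lam -> s <= Ts ->
     (W lam s - W mu s)^2 <= 16 * (lam - mu)^2).
  { intros lam mu s Hl Hm Hs.
    assert (Key : forall t, t < s -> ((W lam s - W mu s)^2 - 16 * (lam - mu)^2) * exp s <= exp t).
    { intros t Ht.
      assert (Hm1 : hfun (W lam) (W mu) 1 (- (16 * (lam - mu)^2)) s <= hfun (W lam) (W mu) 1 (- (16 * (lam - mu)^2)) t).
      { apply hfun_mono with (du := fun x => Fr a E lam x (W lam x)) (dv := fun x => Fr a E mu x (W mu x)).
        - lra.
        - apply W_cont; auto.
        - apply W_cont; auto.
        - intros x Hx; split; apply W_deriv; auto.
        - intros x Hx. apply contr_ineq.
          + apply HTs; lra.
          + apply Half; auto; lra.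
          + apply Half; auto; lra. }
      unfold hfun in Hm1. rewrite !Rmult_1_l in Hm1.
      eapply Rle_trans. { replace ((W lam s - W mu s) ^ 2 - 16 * (lam - mu) ^ 2) with ((W lam s - W mu s) ^ 2 + - (16 * (lam - mu) ^ 2)) by ring. apply Hm1. }
      assert (Hd : Rabs (W lam t - W mu t) <= 1).
      { eapply Rle_trans; [apply Rabs_triang|]. rewrite Rabs_Ropp.
        pose proof (Half lam t Hl ltac:(lra)). pose proof (Half mu t Hm ltac:(lra)). lra. }
      assert ((W lam t - W mu t)^2 <= 1).
      { rewrite <- abs_sq. pose proof (Rabs_pos (W lam t - W mu t)). nra. }
      pose proof (exp_pos t). pose proof (pow2_ge_0 (lam - mu)). nra. }
    apply Rnot_lt_le; intro Hlt.
    set (q := (W lam s - W mu s)^2 - 16 * (lam - mu)^2).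
    assert (Hq : 0 < q) by (unfold q; lra).
    assert (Hln : ln (q / 2) < 0 \/ 0 <= ln (q / 2)) by lra.
    set (t := s + Rmin (ln (q / 2)) (-1)).
    assert (Htl : t < s) by (unfold t; pose proof (Rmin_r (ln (q / 2)) (-1)); lra).
    specialize (Key t Htl). fold q in Key.
    assert (exp t <= q / 2 * exp s).
    { unfold t. rewrite exp_plus, (Rmult_comm (exp s)). apply Rmult_le_compat_r; [left; apply exp_pos|].
      apply Rle_trans with (exp (ln (q / 2))); [|rewrite exp_ln by lra; lra].
      destruct (Req_dec (Rmin (ln (q / 2)) (-1)) (ln (q / 2))) as [->|Hne]; [lra|].
      left; apply exp_increasing. pose proof (Rmin_l (ln (q / 2)) (-1)). lra. }
    pose proof (exp_pos s). nra. }
  destruct (Rle_dec T Ts) as [HT|HT].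
  - exists 16. split; [lra|]. intros; apply Step1; auto.
  - exists ((16 + 2 / kf) * exp (kf * (T - Ts))). split.
    { apply Rmult_le_pos; [|left; apply exp_pos]. pose proof (Rdiv_lt_0_compat 2 kf ltac:(lra) Hk). lra. }
    intros lam mu Hl Hm.
    assert (Fwd : hfun (W lam) (W mu) (- kf) (2 * (lam - mu)^2 / kf) T <=
                  hfun (W lam) (W mu) (- kf) (2 * (lam - mu)^2 / kf) Ts).
    { apply hfun_mono with (du := fun x => Fr a E lam x (W lam x)) (dv := fun x => Fr a E mu x (W mu x)).
      - lra.
      - apply W_cont; auto.
      - apply W_cont; auto.
      - intros x Hx; split; apply W_deriv; auto.
      - intros x Hx. apply fwd_ineq. }
    unfold hfun in Fwd.
    assert (S1 := Step1 lam mu Ts Hl Hm (Rle_refl _)).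
    assert (Hc1 : 0 <= 2 * (lam - mu)^2 / kf) by (apply Rdiv_le_0_compat; [pose proof (pow2_ge_0 (lam - mu)); lra|lra]).
    assert (E1 : exp (- kf * Ts) = exp (kf * (T - Ts)) * exp (- kf * T)).
    { rewrite <- exp_plus. f_equal. ring. }
    rewrite E1 in Fwd.
    assert (HD : (W lam T - W mu T)^2 + 2 * (lam - mu)^2 / kf <=
              ((W lam Ts - W mu Ts)^2 + 2 * (lam - mu)^2 / kf) * exp (kf * (T - Ts))).
    { apply Rmult_le_reg_r with (exp (- kf * T)); [apply exp_pos|]. rewrite Rmult_assoc. auto. }
    replace ((16 + 2 / kf) * exp (kf * (T - Ts)) * (lam - mu) ^ 2) with
      ((16 * (lam - mu)^2 + 2 * (lam - mu)^2 / kf) * exp (kf * (T - Ts))) by (field; lra).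
    pose proof (exp_pos (kf * (T - Ts))).
    assert (((W lam Ts - W mu Ts)^2 + 2 * (lam - mu)^2 / kf) * exp (kf * (T - Ts)) <=
            (16 * (lam - mu)^2 + 2 * (lam - mu)^2 / kf) * exp (kf * (T - Ts))).
    { apply Rmult_le_compat_r; lra. }
    lra.
Qed.

Lemma W_trap_up lam eta T : Rabs lam <= Lam ->
  (forall t, T <= t -> sth t * Kb < sin eta) -> - PI + eta < W lam T ->
  forall t, T <= t -> - PI + eta < W lam t.
Proof.
  intros Hl HT H0 t Ht.
  apply (barrier_lo (W lam) (fun x => Fr a E lam x (W lam x)) T t (- PI + eta)); auto; try lra.
  - apply W_cont; auto.
  - intros x Hx; apply W_deriv; auto.
  - intros x Hx Hw. rewrite Hw, F_decomp.
    replace (- PI + eta) with (- (PI - eta)) by ring. rewrite sin_neg, sin_PI_x.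
    pose proof (pert_bound lam x (- (PI - eta)) Hl). apply Rabs_le_between in H.
    specialize (HT x ltac:(lra)). lra.
Qed.

Lemma W_trap_dn lam eta T : Rabs lam <= Lam ->
  (forall t, T <= t -> sth t * Kb < sin eta) -> W lam T < - PI - eta ->
  forall t, T <= t -> W lam t < - PI - eta.
Proof.
  intros Hl HT H0 t Ht.
  apply (barrier_hi (W lam) (fun x => Fr a E lam x (W lam x)) T t (- PI - eta)); auto; try lra.
  - apply W_cont; auto.
  - intros x Hx; apply W_deriv; auto.
  - intros x Hx Hw. rewrite Hw, F_decomp.
    replace (- PI - eta) with (- (eta + PI)) by ring. rewrite sin_neg, neg_sin.
    pose proof (pert_bound lam x (- (eta + PI)) Hl). apply Rabs_le_between in H.
    specialize (HT x ltac:(lra)). lra.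
Qed.

End Wsec.

Lemma lim_p_eps (f : R -> R) (l : R) : is_lim f p_infty l ->
  forall eps, 0 < eps -> exists M, forall x, M < x -> Rabs (f x - l) < eps.
Proof.
  intros H eps Heps. apply is_lim_spec in H. destruct (H (mkposreal eps Heps)) as [M HM].
  exists M. intros x Hx. apply (HM x Hx).
Qed.

Lemma eps_lim_p (f : R -> R) (l : R) :
  (forall eps, 0 < eps -> exists M, forall x, M < x -> Rabs (f x - l) < eps) -> is_lim f p_infty l.
Proof.
  intros H. apply is_lim_spec. intros eps. destruct (H eps (cond_pos eps)) as [M HM].
  exists M. auto.
Qed.

Theorem corollary1 (a E lam1 lam2 : R) :
  0 < a < 1 / 2 -> 0 <= E <= 1 ->
  lam1 < lam2 -> lam2 < 0 ->
  corridor_K1 a E lam2 0%Z ->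
  (exists k : Z, (1 <= k)%Z /\ corridor_K1 a E lam1 k) ->
  exists lam, lam1 < lam < lam2 /\ saddles_connector a E lam.
Proof.
  intros [Ha _] HE H12 H2 C2 [k [Hk C1]].
  set (Lam := Rabs lam1 + Rabs lam2).
  assert (HLam : 0 <= Lam) by (unfold Lam; pose proof (Rabs_pos lam1); pose proof (Rabs_pos lam2); lra).
  assert (Inb : forall l, lam1 <= l <= lam2 -> Rabs l <= Lam).
  { intros l Hl. unfold Lam. rewrite (Rabs_left l), (Rabs_left lam1), (Rabs_left lam2) by lra.
    lra. }
  set (Kb' := Kb a E Lam).
  assert (HKb : 0 < Kb') by (apply Kb_pos; auto).
  assert (Traj : forall l, lam1 <= l <= lam2 -> is_traj a E l th (W a E l)).
  { intros l Hl t. split; [apply th_deriv|]. apply (W_deriv a E Lam Ha HE HLam l (Inb l Hl) t). }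
  assert (Wm : forall l, lam1 <= l <= lam2 -> is_Wminus a E l th (W a E l)).
  { intros l Hl. split; [apply Traj; auto|]. split; [intros t; apply th_bounds|].
    split; [apply th_lim_m|]. apply (W_lim_m a E Lam Ha HE HLam l (Inb l Hl)). }
  assert (Tsm : forall eta, 0 < sin eta -> exists T, forall t, T <= t -> sth t * Kb' < sin eta).
  { intros eta Hs. destruct (sth_small_p (sin eta / (2 * Kb'))) as [T HT].
    { apply Rdiv_lt_0_compat; lra. }
    exists T. intros t Ht. specialize (HT t Ht). pose proof (sth_pos t).
    apply Rle_lt_trans with (sin eta / (2 * Kb') * Kb'); [apply Rmult_le_compat_r; lra|].
    replace (sin eta / (2 * Kb') * Kb') with (sin eta / 2) by (field; lra). lra. }
  set (Up := fun l => exists eta T, 0 < eta /\ (forall t, T <= t -> sth t * Kb' < sin eta) /\ - PI + eta < W a E l T).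
  set (Dn := fun l => exists eta T, 0 < eta /\ (forall t, T <= t -> sth t * Kb' < sin eta) /\ W a E l T < - PI - eta).
  assert (Disj : forall l, lam1 <= l <= lam2 -> Up l -> Dn l -> False).
  { intros l Hl [e1 [T1 [He1 [HT1 HW1]]]] [e2 [T2 [He2 [HT2 HW2]]]].
    set (t := Rmax T1 T2).
    assert (A1 := W_trap_up a E Lam Ha HE HLam l e1 T1 (Inb l Hl) HT1 HW1 t (Rmax_l _ _)).
    assert (A2 := W_trap_dn a E Lam Ha HE HLam l e2 T2 (Inb l Hl) HT2 HW2 t (Rmax_r _ _)).
    lra. }
  assert (PIb := PI2_3_2).
  assert (sinPI2 : sin (PI / 2) = 1) by apply sin_PI2.
  assert (Up2 : Up lam2).
  { destruct C2 as [_ [_ Hom]]. specialize (Hom th (W a E lam2) (Wm lam2 ltac:(lra))).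
    destruct Hom as [_ Hom]. replace (- 2 * PI * IZR 0) with 0 in Hom by (simpl; ring).
    destruct (lim_p_eps _ _ Hom (PI / 2)) as [M HM]; [lra|].
    destruct (Tsm (PI / 2)) as [T1 HT1]; [lra|].
    exists (PI / 2), (Rmax T1 (M + 1)). split; [lra|]. split.
    - intros t Ht. apply HT1. pose proof (Rmax_l T1 (M + 1)). lra.
    - specialize (HM (Rmax T1 (M + 1)) ltac:(pose proof (Rmax_r T1 (M + 1)); lra)).
      apply Rabs_lt_between in HM. lra. }
  assert (Dn1 : Dn lam1).
  { destruct C1 as [_ [_ Hom]]. specialize (Hom th (W a E lam1) (Wm lam1 ltac:(lra))).
    destruct Hom as [_ Hom].
    assert (Hk1 : 1 <= IZR k) by (apply IZR_le; auto).
    destruct (lim_p_eps _ _ Hom (PI / 2)) as [M HM]; [lra|].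
    destruct (Tsm (PI / 2)) as [T1 HT1]; [lra|].
    exists (PI / 2), (Rmax T1 (M + 1)). split; [lra|]. split.
    - intros t Ht. apply HT1. pose proof (Rmax_l T1 (M + 1)). lra.
    - specialize (HM (Rmax T1 (M + 1)) ltac:(pose proof (Rmax_r T1 (M + 1)); lra)).
      apply Rabs_lt_between in HM.
      assert (- 2 * PI * IZR k <= - 2 * PI) by (assert (0 < PI) by lra; nra). lra. }
  assert (Close : forall l T g, lam1 <= l <= lam2 -> 0 < g -> exists r, 0 < r /\
     forall mu, lam1 <= mu <= lam2 -> Rabs (mu - l) < r -> Rabs (W a E mu T - W a E l T) < g).
  { intros l T g Hl Hg. destruct (W_param a E Lam Ha HE HLam T) as [C [HC HCb]].
    exists (g / (C + 1)). split; [apply Rdiv_lt_0_compat; lra|].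
    intros mu Hmu Hr. specialize (HCb mu l (Inb mu Hmu) (Inb l Hl)).
    apply Rnot_le_lt; intro Hge.
    assert (g ^ 2 <= (W a E mu T - W a E l T) ^ 2).
    { rewrite <- (abs_sq (W a E mu T - W a E l T)). simpl. nra. }
    assert ((mu - l) ^ 2 < (g / (C + 1)) ^ 2).
    { rewrite <- (abs_sq (mu - l)). simpl. pose proof (Rabs_pos (mu - l)).
      assert (0 < g / (C + 1)) by (apply Rdiv_lt_0_compat; lra). nra. }
    assert (C * (g / (C + 1)) ^ 2 < g ^ 2).
    { replace (C * (g / (C + 1)) ^ 2) with (g ^ 2 * (C / (C + 1) ^ 2)) by (field; lra).
      rewrite <- (Rmult_1_r (g ^ 2)) at 2. apply Rmult_lt_compat_l; [nra|].
      apply (Rmult_lt_reg_r ((C + 1)^2)); [nra|].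
      replace (C / (C + 1) ^ 2 * (C + 1) ^ 2) with C by (field; lra). nra. }
    nra. }
  assert (UpOpen : forall l, lam1 <= l <= lam2 -> Up l -> exists r, 0 < r /\
     forall mu, lam1 <= mu <= lam2 -> Rabs (mu - l) < r -> Up mu).
  { intros l Hl [e [T [He [HT HW]]]].
    destruct (Close l T (W a E l T - (- PI + e)) Hl ltac:(lra)) as [r [Hr Hcl]].
    exists r. split; auto. intros mu Hmu Hd. exists e, T. split; auto. split; auto.
    specialize (Hcl mu Hmu Hd). apply Rabs_lt_between in Hcl. lra. }
  assert (DnOpen : forall l, lam1 <= l <= lam2 -> Dn l -> exists r, 0 < r /\
     forall mu, lam1 <= mu <= lam2 -> Rabs (mu - l) < r -> Dn mu).
  { intros l Hl [e [T [He [HT HW]]]].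
    destruct (Close l T ((- PI - e) - W a E l T) Hl ltac:(lra)) as [r [Hr Hcl]].
    exists r. split; auto. intros mu Hmu Hd. exists e, T. split; auto. split; auto.
    specialize (Hcl mu Hmu Hd). apply Rabs_lt_between in Hcl. lra. }
  set (S := fun l => lam1 <= l <= lam2 /\ Dn l).
  assert (HSb : bound S) by (exists lam2; intros l [Hl _]; lra).
  assert (HSn : exists l, S l) by (exists lam1; split; [lra|auto]).
  destruct (completeness S HSb HSn) as [ls [Hub Hlub]].
  assert (Hls1 : lam1 < ls).
  { destruct (DnOpen lam1 ltac:(lra) Dn1) as [r [Hr Hop]].
    set (p := Rmin (lam1 + r / 2) lam2).
    assert (Hp : lam1 < p <= lam2) by (unfold p; split; [apply Rmin_glb_lt; lra|apply Rmin_r]).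
    assert (S p).
    { split; [lra|]. apply Hop; [lra|]. rewrite Rabs_right by lra.
      pose proof (Rmin_l (lam1 + r / 2) lam2). fold p in H. lra. }
    assert (p <= ls) by (apply Hub; auto). lra. }
  assert (Hls2 : ls < lam2).
  { destruct (UpOpen lam2 ltac:(lra) Up2) as [r [Hr Hop]].
    set (q := Rmax (lam2 - r / 2) lam1).
    assert (Hq : lam1 <= q < lam2) by (unfold q; split; [apply Rmax_r|apply Rmax_lub_lt; lra]).
    assert (ls <= q).
    { apply Hlub. intros l [Hl HDl]. apply Rnot_lt_le; intro Hlq.
      apply (Disj l Hl); auto. apply Hop; auto.
      rewrite Rabs_left1 by lra. pose proof (Rmax_l (lam2 - r / 2) lam1). fold q in H. lra. }
    lra. }
  assert (NDn : ~ Dn ls).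
  { intros HD. destruct (DnOpen ls ltac:(lra) HD) as [r [Hr Hop]].
    set (p := Rmin (ls + r / 2) lam2).
    assert (Hp : ls < p <= lam2) by (unfold p; split; [apply Rmin_glb_lt; lra|apply Rmin_r]).
    assert (S p).
    { split; [lra|]. apply Hop; [lra|]. rewrite Rabs_right by lra.
      pose proof (Rmin_l (ls + r / 2) lam2). fold p in H. lra. }
    assert (p <= ls) by (apply Hub; auto). lra. }
  assert (NUp : ~ Up ls).
  { intros HU. destruct (UpOpen ls ltac:(lra) HU) as [r [Hr Hop]].
    assert (ls <= ls - r / 2); [|lra].
    apply Hlub. intros l [Hl HDl]. apply Rnot_lt_le; intro Hlq.
    assert (l <= ls) by (apply Hub; split; auto).
    apply (Disj l Hl); auto. apply Hop; auto.
    rewrite Rabs_left1 by lra. lra. }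
  exists ls. split; [lra|].
  exists th, (W a E ls). split; [apply Traj; lra|]. split.
  - split; [apply th_lim_m|]. apply (W_lim_m a E Lam Ha HE HLam ls (Inb ls ltac:(lra))).
  - split; [apply th_lim_p|]. apply eps_lim_p. intros eps Heps.
    set (eta := Rmin (eps / 2) (PI / 2)).
    assert (Heta : 0 < eta <= PI / 2) by (unfold eta; split; [apply Rmin_glb_lt; lra|apply Rmin_r]).
    assert (Hse : 0 < sin eta) by (apply sin_gt_0; lra).
    destruct (Tsm eta Hse) as [T HT].
    exists T. intros x Hx.
    assert (Hup : W a E ls x <= - PI + eta).
    { apply Rnot_lt_le; intro Hlt. apply NUp. exists eta, x. split; [lra|]. split; auto.
      intros t Ht; apply HT; lra. }
    assert (Hdn : - PI - eta <= W a E ls x).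
    { apply Rnot_lt_le; intro Hlt. apply NDn. exists eta, x. split; [lra|]. split; auto.
      intros t Ht; apply HT; lra. }
    assert (eta <= eps / 2) by apply Rmin_l.
    apply Rabs_lt_between. lra.
Qed.
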